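(* Let $(X_i,\mathbf{x}_m,X_f)$ be an instance of the three-point Dubins path problem. In any optimal path of type $C_1S_2C_3S_4C_5$, the inverses of (the lines containing) the straight segments $S_2$ and $S_4$ with respect to the circle centered at $\mathbf{x}_m$ with radius $R_{\min}$ are two circles of equal radius.
   Context: A Dubins vehicle moves forward in the plane with unit speed and minimum turning radius $R_{\min}$: $\dot x=\cos\alpha$, $\dot y=\sin\alpha$, $\dot\alpha=u$, $|u|\le 1/R_{\min}$. A configuration is $X=(\mathbf{x},\alpha)$ with heading $\alpha\in[0,2\pi)$. The three-point Dubins path problem: given initial and final configurations $X_i,X_f$ and a midpoint $\mathbf{x}_m$, with pairwise Euclidean distances among $\mathbf{x}_i,\mathbf{x}_m,\mathbf{x}_f$ at least $4R_{\min}$, find a heading at $\mathbf{x}_m$ minimizing the length of the shortest Dubins path from $X_i$ through $\mathbf{x}_m$ with that heading to $X_f$. A path of type $C_1S_2C_3S_4C_5$ consists of minimum-radius arcs $C_1$ (starting at $X_i$), $C_3$ (passing through $\mathbf{x}_m$), $C_5$ (ending at $X_f$), each a left or right turn, connected by straight segments $S_2$ and $S_4$. Circle inversion with respect to the circle of center $O$ and radius $r$ maps $P\neq O$ to the point on ray $OP$ at distance $r^2/|OP|$ from $O$; the inverse of a segment means the inverse of the full line containing it. *)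

(* Defs.v *)
From Stdlib Require Import Reals.
Open Scope R_scope.

(* Points of the plane and configurations (position, heading). *)
Definition pt := (R * R)%type.
Definition config := (pt * R)%type.

Definition pdist (p q : pt) : R :=
  sqrt ((fst p - fst q) ^ 2 + (snd p - snd q) ^ 2).

(* An admissible Dubins trajectory of duration (= length, unit speed) L:
   xdot = cos a, ydot = sin a, and the heading a is Lipschitz with
   constant 1/Rmin (equivalently a is absolutely continuous with
   |adot| = |u| <= 1/Rmin a.e.). *)
Definition dubins_traj (Rmin L : R) (x y a : R -> R) : Prop :=
  0 <= L /\
  (forall t, 0 <= t <= L ->
     derivable_pt_lim x t (cos (a t)) /\ derivable_pt_lim y t (sin (a t))) /\
  (forall s t, 0 <= s <= L -> 0 <= t <= L ->
     Rabs (a t - a s) <= Rabs (t - s) / Rmin).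

(* Headings are taken modulo 2*pi. *)
Definition same_heading (a b : R) : Prop := cos a = cos b /\ sin a = sin b.

Definition three_point_path (Rmin : R) (Xi : config) (xm : pt) (Xf : config)
    (L : R) (x y a : R -> R) : Prop :=
  dubins_traj Rmin L x y a /\
  (x 0, y 0) = fst Xi /\ same_heading (a 0) (snd Xi) /\
  (x L, y L) = fst Xf /\ same_heading (a L) (snd Xf) /\
  exists tm, 0 <= tm <= L /\ (x tm, y tm) = xm.

(* Optimal: minimal length among all feasible three-point paths
   (= minimizing over the heading at xm the shortest-path length). *)
Definition optimal_three_point_path (Rmin : R) (Xi : config) (xm : pt)
    (Xf : config) (L : R) (x y a : R -> R) : Prop :=
  three_point_path Rmin Xi xm Xf L x y a /\
  forall L' x' y' a', three_point_path Rmin Xi xm Xf L' x' y' a' -> L <= L'.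

Definition arc_on (Rmin : R) (a : R -> R) (t0 t1 : R) : Prop :=
  exists k, (k = 1 / Rmin \/ k = - (1 / Rmin)) /\
    forall t, t0 <= t <= t1 -> a t = a t0 + k * (t - t0).

Definition straight_on (a : R -> R) (t0 t1 : R) : Prop :=
  forall t, t0 <= t <= t1 -> a t = a t0.

Definition CSCSC_type (Rmin : R) (xm : pt) (L : R) (x y a : R -> R)
    (t1 t2 t3 t4 : R) : Prop :=
  0 < t1 < t2 /\ t2 < t3 /\ t3 < t4 /\ t4 < L /\
  arc_on Rmin a 0 t1 /\ straight_on a t1 t2 /\ arc_on Rmin a t2 t3 /\
  straight_on a t3 t4 /\ arc_on Rmin a t4 L /\
  exists tm, t2 <= tm <= t3 /\ (x tm, y tm) = xm.

Definition inversion (O : pt) (r : R) (P : pt) : pt :=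
  let k := r ^ 2 / (pdist O P) ^ 2 in
  (fst O + k * (fst P - fst O), snd O + k * (snd P - snd O)).

Definition line_through (P Q : pt) (X : pt) : Prop :=
  exists s, X = (fst P + s * (fst Q - fst P), snd P + s * (snd Q - snd P)).

Definition inverse_set (O : pt) (r : R) (S : pt -> Prop) (Y : pt) : Prop :=
  exists X, S X /\ X <> O /\ Y = inversion O r X.

(* The set T is the circle of center c and radius rho > 0, except possibly
   for the center of inversion O (which is never an image point). *)
Definition is_circle_off (O : pt) (T : pt -> Prop) (c : pt) (rho : R) : Prop :=
  0 < rho /\ forall Y, Y <> O -> (T Y <-> pdist Y c = rho).

(* Main.v *)
Require Import Defs.
From Stdlib Require Import Reals Lra Psatz.
From Coquelicot Require Import Coquelicot.
Open Scope R_scope.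


Lemma mvt_bound (f f' : R -> R) (a b M : R) :
  (forall c, Rmin a b <= c <= Rmax a b -> derivable_pt_lim f c (f' c)) ->
  (forall c, Rmin a b <= c <= Rmax a b -> Rabs (f' c) <= M) ->
  Rabs (f b - f a) <= M * Rabs (b - a).
Proof.
  intros Hd Hb.
  destruct (Rtotal_order a b) as [Hab|[Hab|Hab]].
  - destruct (MVT_cor2 f f' a b Hab) as [c [Hc1 Hc2]].
    { intros c Hc; apply Hd; rewrite Rmin_left, Rmax_right; lra. }
    rewrite Hc1, Rabs_mult.
    apply Rmult_le_compat_r; [apply Rabs_pos|].
    apply Hb; rewrite Rmin_left, Rmax_right; lra.
  - subst. replace (f b - f b) with 0 by ring. replace (b - b) with 0 by ring.
    rewrite Rabs_R0; lra.
  - destruct (MVT_cor2 f f' b a Hab) as [c [Hc1 Hc2]].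
    { intros c Hc; apply Hd; rewrite Rmin_right, Rmax_left; lra. }
    replace (f b - f a) with (- (f a - f b)) by ring.
    replace (b - a) with (- (a - b)) by ring.
    rewrite !Rabs_Ropp, Hc1, Rabs_mult.
    apply Rmult_le_compat_r; [apply Rabs_pos|].
    apply Hb; rewrite Rmin_right, Rmax_left; lra.
Qed.

Lemma sin_lip (a b : R) : Rabs (sin b - sin a) <= Rabs (b - a).
Proof.
  rewrite <- (Rmult_1_l (Rabs (b - a))).
  apply (mvt_bound sin cos).
  - intros; apply derivable_pt_lim_sin.
  - intros; apply Rabs_le; apply COS_bound.
Qed.

Lemma cos_lip (a b : R) : Rabs (cos b - cos a) <= Rabs (b - a).
Proof.
  rewrite <- (Rmult_1_l (Rabs (b - a))).
  apply (mvt_bound cos (fun t => - sin t)).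
  - intros; apply derivable_pt_lim_cos.
  - intros; rewrite Rabs_Ropp; apply Rabs_le; apply SIN_bound.
Qed.

Lemma sin_abs_le (d : R) : Rabs (sin d) <= Rabs d.
Proof.
  pose proof (sin_lip 0 d). rewrite sin_0 in H.
  replace (sin d - 0) with (sin d) in H by ring.
  replace (d - 0) with d in H by ring. exact H.
Qed.

Lemma cos_lb2 (d : R) : 1 - d^2/2 <= cos d.
Proof.
  replace d with (2 * (d/2)) at 2 by field.
  rewrite cos_2a_sin.
  pose proof (sin_abs_le (d/2)).
  assert (sin (d/2) * sin (d/2) <= (d/2)*(d/2)).
  { apply Rsqr_le_abs_1 in H. unfold Rsqr in H. exact H. }
  nra.
Qed.

Lemma one_minus_cos (d : R) : 0 <= 1 - cos d <= d^2/2.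
Proof. pose proof (cos_lb2 d); pose proof (COS_bound d); lra. Qed.

Lemma sin_minus_id (d : R) : Rabs (sin d - d) <= Rabs d ^ 3 / 2.
Proof.
  assert (H := mvt_bound (fun t => sin t - t) (fun t => cos t - 1) 0 d (d^2/2)).
  cbv beta in H. rewrite sin_0 in H.
  replace (sin d - d - (0 - 0)) with (sin d - d) in H by ring.
  replace (d - 0) with d in H by ring.
  replace (Rabs d ^ 3 / 2) with (d^2/2 * Rabs d) by (rewrite <- pow2_abs; field).
  apply H.
  - intros c _. apply derivable_pt_lim_minus.
    + apply derivable_pt_lim_sin.
    + apply derivable_pt_lim_id.
  - intros c Hc. pose proof (one_minus_cos c).
    rewrite Rabs_left1 by lra.
    assert (c^2 <= d^2).
    { unfold Rmin, Rmax in Hc. destruct (Rle_dec 0 d); nra. }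
    lra.
Qed.

Lemma atan_abs_le (z : R) : Rabs (atan z) <= Rabs z.
Proof.
  assert (H := mvt_bound atan (fun t => / (1 + t^2)) 0 z 1).
  cbv beta in H. rewrite atan_0 in H. replace (atan z - 0) with (atan z) in H by ring.
  replace (z - 0) with z in H by ring. rewrite Rmult_1_l in H.
  apply H.
  - intros; apply derivable_pt_lim_atan.
  - intros c _. assert (0 <= c^2) by nra.
    rewrite Rabs_right.
    + rewrite <- Rinv_1. apply Rinv_le_contravar; lra.
    + apply Rle_ge, Rlt_le, Rinv_0_lt_compat; lra.
Qed.

Lemma deriv_local (f g : R -> R) (t l eta : R) :
  0 < eta -> (forall s, Rabs (s - t) < eta -> f s = g s) ->
  derivable_pt_lim g t l -> derivable_pt_lim f t l.
Proof.
  intros He Hfg Hg eps Heps.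
  destruct (Hg eps Heps) as [d Hd].
  assert (Hm : 0 < Rmin d eta) by (apply Rmin_pos; [apply cond_pos|lra]).
  exists (mkposreal _ Hm). intros h Hh0 Hh. simpl in Hh.
  rewrite (Hfg (t + h)), (Hfg t).
  - apply Hd; auto. eapply Rlt_le_trans; [exact Hh| apply Rmin_l].
  - replace (t - t) with 0 by ring. rewrite Rabs_R0; lra.
  - replace (t + h - t) with h by ring. eapply Rlt_le_trans; [exact Hh| apply Rmin_r].
Qed.

Lemma deriv_glue (f g : R -> R) (T l : R) :
  f T = g T -> derivable_pt_lim f T l -> derivable_pt_lim g T l ->
  derivable_pt_lim (fun t => if Rle_dec t T then f t else g t) T l.
Proof.
  intros HT Hf Hg eps Heps.
  destruct (Hf eps Heps) as [d1 Hd1].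
  destruct (Hg eps Heps) as [d2 Hd2].
  assert (Hm : 0 < Rmin d1 d2) by (apply Rmin_pos; apply cond_pos).
  exists (mkposreal _ Hm). intros h Hh0 Hh. simpl in Hh.
  destruct (Rle_dec T T) as [_|n]; [|lra].
  destruct (Rle_dec (T + h) T).
  - apply Hd1; auto. eapply Rlt_le_trans; [exact Hh| apply Rmin_l].
  - rewrite HT. apply Hd2; auto. eapply Rlt_le_trans; [exact Hh| apply Rmin_r].
Qed.

Lemma deriv_shift (g : R -> R) (t c l : R) :
  derivable_pt_lim g (t - c) l -> derivable_pt_lim (fun s => g (s - c)) t l.
Proof.
  intros Hg eps Heps. destruct (Hg eps Heps) as [d Hd].
  exists d. intros h Hh0 Hh.
  replace (t + h - c) with (t - c + h) by ring. apply Hd; auto.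
Qed.

Definition good (Rm L : R) (p0 : pt) (a0 : R) (p1 : pt) (a1 : R)
  (x y a : R -> R) : Prop :=
  dubins_traj Rm L x y a /\ (x 0, y 0) = p0 /\ a 0 = a0 /\
  (x L, y L) = p1 /\ a L = a1.

Definition passes (L : R) (x y : R -> R) (q : pt) : Prop :=
  exists t, 0 <= t <= L /\ (x t, y t) = q.

Definition glue (T : R) (f g : R -> R) : R -> R :=
  fun t => if Rle_dec t T then f t else g (t - T).

Lemma glue_deriv (T : R) (f g : R -> R) (t l : R) (Hdec : T >= 0) :
  f T = g 0 ->
  (t <= T -> derivable_pt_lim f t l) ->
  (T <= t -> derivable_pt_lim g (t - T) l) ->
  derivable_pt_lim (glue T f g) t l.
Proof.
  intros H0 Hf Hg.
  destruct (Rtotal_order t T) as [Hlt|[Heq|Hgt]].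
  - apply (deriv_local _ f t l (T - t)); [lra| |apply Hf; lra].
    intros s Hs. unfold glue. destruct (Rle_dec s T); auto.
    exfalso. apply Rabs_def2 in Hs. lra.
  - subst t. unfold glue.
    apply (deriv_glue f (fun s => g (s - T))).
    + replace (T - T) with 0 by ring. auto.
    + apply Hf; lra.
    + apply deriv_shift. apply Hg; lra.
  - apply (deriv_local _ (fun s => g (s - T)) t l (t - T)); [lra| |].
    + intros s Hs. unfold glue. destruct (Rle_dec s T); auto.
      exfalso. apply Rabs_def2 in Hs. lra.
    + apply deriv_shift. apply Hg; lra.
Qed.

Lemma Rabs_nonneg (u : R) : 0 <= u -> Rabs u = u.
Proof. intros; apply Rabs_right; lra. Qed.

Lemma concat (Rm L1 L2 : R) p0 a0 p1 b1 p2 b2 x1 y1 A1 x2 y2 A2 :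
  0 < Rm ->
  good Rm L1 p0 a0 p1 b1 x1 y1 A1 -> good Rm L2 p1 b1 p2 b2 x2 y2 A2 ->
  exists x y a, good Rm (L1 + L2) p0 a0 p2 b2 x y a /\
    (forall q, passes L1 x1 y1 q -> passes (L1 + L2) x y q) /\
    (forall q, passes L2 x2 y2 q -> passes (L1 + L2) x y q).
Proof.
  intros HR [[HL1 [Hd1 Hl1]] [Hs1 [Ha1 [He1 Hb1]]]] [[HL2 [Hd2 Hl2]] [Hs2 [Ha2 [He2 Hb2]]]].
  rewrite <- He1 in Hs2. injection Hs2 as Hx Hy. rewrite <- Hb1 in Ha2.
  exists (glue L1 x1 x2), (glue L1 y1 y2), (glue L1 A1 A2).
  assert (Hev : forall f g : R -> R, f L1 = g 0 -> forall t, 0 <= t <= L2 -> glue L1 f g (L1 + t) = g t).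
  { intros f g Hfg t Ht. unfold glue. destruct (Rle_dec (L1 + t) L1).
    - assert (t = 0) by lra. subst t. rewrite Rplus_0_r. auto.
    - f_equal. ring. }
  assert (Hsv : forall f g : R -> R, forall t, 0 <= t <= L1 -> glue L1 f g t = f t).
  { intros f g t Ht. unfold glue. destruct (Rle_dec t L1); auto; lra. }
  split; [split; [split; [lra|split]|split; [|split; [|split]]]|].
  - intros t Ht. unfold glue at 2 4.
    destruct (Rle_dec t L1) as [Htl|Htl].
    + split; apply glue_deriv; auto; try lra; intros.
      * apply Hd1; lra.
      * assert (t = L1) by lra. subst t. replace (L1 - L1) with 0 by ring.
        rewrite <- Ha2. apply Hd2; lra.
      * apply Hd1; lra.
      * assert (t = L1) by lra. subst t. replace (L1 - L1) with 0 by ring.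
        rewrite <- Ha2. apply Hd2; lra.
    + split; apply glue_deriv; auto; try lra; intros.
      * apply Hd2; lra.
      * apply Hd2; lra.
  - intros s t Hs Ht. unfold glue.
    destruct (Rle_dec t L1); destruct (Rle_dec s L1).
    + apply Hl1; lra.
    + assert (H1 := Hl1 t L1 ltac:(lra) ltac:(lra)).
      assert (H2 := Hl2 0 (s - L1) ltac:(lra) ltac:(lra)).
      rewrite Ha2 in H2.
      replace (A1 t - A2 (s - L1)) with (-(A2 (s - L1) - A1 L1) + -(A1 L1 - A1 t)) by ring.
      eapply Rle_trans; [apply Rabs_triang|]. rewrite Rabs_Ropp, Rabs_Ropp.
      rewrite (Rabs_nonneg (L1 - t)) in H1 by lra.
      rewrite (Rabs_nonneg (s - L1 - 0)) in H2 by lra.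
      replace (Rabs (t - s)) with (s - L1 + (L1 - t)) by (rewrite Rabs_left1; lra).
      replace ((s - L1 + (L1 - t)) / Rm) with ((s - L1 - 0)/Rm + (L1 - t)/Rm) by (field; lra).
      apply Rplus_le_compat; [exact H2|]. exact H1.
    + assert (H1 := Hl1 s L1 ltac:(lra) ltac:(lra)).
      assert (H2 := Hl2 0 (t - L1) ltac:(lra) ltac:(lra)).
      rewrite Ha2 in H2.
      replace (A2 (t - L1) - A1 s) with ((A2 (t - L1) - A1 L1) + (A1 L1 - A1 s)) by ring.
      eapply Rle_trans; [apply Rabs_triang|].
      rewrite (Rabs_nonneg (L1 - s)) in H1 by lra.
      rewrite (Rabs_nonneg (t - L1 - 0)) in H2 by lra.
      replace (Rabs (t - s)) with (t - L1 + (L1 - s)) by (rewrite Rabs_right; lra).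
      replace ((t - L1 + (L1 - s)) / Rm) with ((t - L1 - 0)/Rm + (L1 - s)/Rm) by (field; lra).
      apply Rplus_le_compat; [exact H2|]. exact H1.
    + replace (t - s) with ((t - L1) - (s - L1)) by ring. apply Hl2; lra.
  - rewrite !Hsv by lra. auto.
  - rewrite Hsv by lra. auto.
  - replace (L1 + L2) with (L1 + L2) by ring.
    rewrite !Hev by (auto; lra). auto.
  - rewrite Hev by (auto; lra). auto.
  - split.
    + intros q [t [Ht Hq]]. exists t. split; [lra|]. rewrite !Hsv by lra. auto.
    + intros q [t [Ht Hq]]. exists (L1 + t). split; [lra|]. rewrite !Hev by (auto; lra). auto.
Qed.

Lemma arc_piece (Rm s l : R) (p : pt) (al : R) :
  0 < Rm -> (s = 1 \/ s = -1) -> 0 <= l ->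
  good Rm l p al
    (fst p + s * Rm * (sin (al + s * l / Rm) - sin al),
     snd p - s * Rm * (cos (al + s * l / Rm) - cos al))
    (al + s * l / Rm)
    (fun t => fst p + s * Rm * (sin (al + s * t / Rm) - sin al))
    (fun t => snd p - s * Rm * (cos (al + s * t / Rm) - cos al))
    (fun t => al + s * t / Rm).
Proof.
  intros HR Hs Hl.
  assert (Hs2 : s * s = 1) by (destruct Hs; subst; ring).
  split; [split; [lra|split]|].
  - intros t Ht. split; apply is_derive_Reals; auto_derive; auto.
    + unfold Rdiv. transitivity (s*s*(Rm*/Rm)*cos (al + s*t*/Rm)); [ring|].
      rewrite Hs2, Rinv_r; lra.
    + unfold Rdiv. transitivity (s*s*(Rm*/Rm)*sin (al + s*t*/Rm)); [ring|].
      rewrite Hs2, Rinv_r; lra.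
  - intros u t Hu Ht.
    replace (al + s * t / Rm - (al + s * u / Rm)) with (s * ((t - u) / Rm)) by (field; lra).
    rewrite Rabs_mult. replace (Rabs s) with 1 by (destruct Hs; subst; unfold Rabs; destruct Rcase_abs; lra).
    rewrite Rabs_div by lra. rewrite (Rabs_right Rm) by lra. lra.
  - assert (Hz : al + s * 0 / Rm = al) by (unfold Rdiv; ring).
    rewrite Hz. destruct p as [p1 p2]. simpl.
    repeat split; try reflexivity. f_equal; ring.
Qed.

Lemma line_piece (Rm l : R) (p : pt) (al : R) :
  0 < Rm -> 0 <= l ->
  good Rm l p al (fst p + l * cos al, snd p + l * sin al) al
    (fun t => fst p + t * cos al) (fun t => snd p + t * sin al) (fun _ => al).
Proof.
  intros HR Hl.
  split; [split; [lra|split]|].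
  - intros t Ht. split; apply is_derive_Reals; auto_derive; auto; ring.
  - intros u t Hu Ht. replace (al - al) with 0 by ring. rewrite Rabs_R0.
    apply Rmult_le_pos; [apply Rabs_pos| left; apply Rinv_0_lt_compat; lra].
  - destruct p as [p1 p2]. simpl. repeat split; try reflexivity. f_equal; ring.
Qed.

Lemma good_passes_end Rm L p0 a0 p1 a1 x y a :
  good Rm L p0 a0 p1 a1 x y a -> passes L x y p1.
Proof. intros [[HL _] [_ [_ [He _]]]]. exists L. split; [lra|auto]. Qed.

Lemma arc_good (Rm s l cx cy px py al be qx qy : R) :
  0 < Rm -> (s = 1 \/ s = -1) -> 0 <= l ->
  al + s * l / Rm = be ->
  px = cx + s * Rm * sin al -> py = cy - s * Rm * cos al ->
  qx = cx + s * Rm * sin be -> qy = cy - s * Rm * cos be ->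
  exists x y a, good Rm l (px, py) al (qx, qy) be x y a.
Proof.
  intros HR Hs Hl Hbe Hp1 Hp2 Hq1 Hq2.
  pose proof (arc_piece Rm s l (px, py) al HR Hs Hl) as H.
  simpl in H. rewrite Hbe in H.
  replace (px + s * Rm * (sin be - sin al)) with qx in H by (subst; ring).
  replace (py - s * Rm * (cos be - cos al)) with qy in H by (subst; ring).
  eauto.
Qed.

Lemma line_good (Rm l px py al qx qy : R) :
  0 < Rm -> 0 <= l ->
  qx = px + l * cos al -> qy = py + l * sin al ->
  exists x y a, good Rm l (px, py) al (qx, qy) al x y a.
Proof.
  intros HR Hl Hq1 Hq2.
  pose proof (line_piece Rm l (px, py) al HR Hl) as H. simpl in H.
  rewrite <- Hq1, <- Hq2 in H. eauto.
Qed.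

Lemma six_piece (Rm s1 s3 s5 p0x p0y al0 A1 l2 B1 B2 l4 A5
  psi th psi4 ae c1x c1y c3x c3y c5x c5y xmx xmy pex pey : R) :
  0 < Rm -> (s1 = 1 \/ s1 = -1) -> (s3 = 1 \/ s3 = -1) -> (s5 = 1 \/ s5 = -1) ->
  0 <= A1 -> 0 <= l2 -> 0 <= B1 -> 0 <= B2 -> 0 <= l4 -> 0 <= A5 ->
  al0 + s1 * A1 / Rm = psi ->
  p0x = c1x + s1 * Rm * sin al0 -> p0y = c1y - s1 * Rm * cos al0 ->
  c3x - c1x = l2 * cos psi - (s3 - s1) * Rm * sin psi ->
  c3y - c1y = l2 * sin psi + (s3 - s1) * Rm * cos psi ->
  psi + s3 * B1 / Rm = th ->
  xmx = c3x + s3 * Rm * sin th -> xmy = c3y - s3 * Rm * cos th ->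
  th + s3 * B2 / Rm = psi4 ->
  c5x - c3x = l4 * cos psi4 - (s5 - s3) * Rm * sin psi4 ->
  c5y - c3y = l4 * sin psi4 + (s5 - s3) * Rm * cos psi4 ->
  psi4 + s5 * A5 / Rm = ae ->
  pex = c5x + s5 * Rm * sin ae -> pey = c5y - s5 * Rm * cos ae ->
  exists x y a, good Rm (A1 + (l2 + (B1 + (B2 + (l4 + A5))))) (p0x, p0y) al0 (pex, pey) ae x y a
    /\ passes (A1 + (l2 + (B1 + (B2 + (l4 + A5))))) x y (xmx, xmy).
Proof.
  intros HR Hs1 Hs3 Hs5 HA1 Hl2 HB1 HB2 Hl4 HA5 E1 Ep1 Ep2 E2 E3 E4 Em1 Em2 E5 E6 E7 E8 Ee1 Ee2.
  destruct (arc_good Rm s1 A1 c1x c1y p0x p0y al0 psi (c1x + s1 * Rm * sin psi) (c1y - s1 * Rm * cos psi))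
    as [x1 [y1 [a1 G1]]]; auto.
  destruct (line_good Rm l2 (c1x + s1 * Rm * sin psi) (c1y - s1 * Rm * cos psi) psi
     (c3x + s3 * Rm * sin psi) (c3y - s3 * Rm * cos psi)) as [x2 [y2 [a2 G2]]]; auto; try lra.
  destruct (arc_good Rm s3 B1 c3x c3y (c3x + s3 * Rm * sin psi) (c3y - s3 * Rm * cos psi) psi th xmx xmy)
    as [x3 [y3 [a3 G3]]]; auto.
  destruct (arc_good Rm s3 B2 c3x c3y xmx xmy th psi4 (c3x + s3 * Rm * sin psi4) (c3y - s3 * Rm * cos psi4))
    as [x4 [y4 [a4 G4]]]; auto.
  destruct (line_good Rm l4 (c3x + s3 * Rm * sin psi4) (c3y - s3 * Rm * cos psi4) psi4
     (c5x + s5 * Rm * sin psi4) (c5y - s5 * Rm * cos psi4)) as [x5 [y5 [a5 G5]]]; auto; try lra.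
  destruct (arc_good Rm s5 A5 c5x c5y (c5x + s5 * Rm * sin psi4) (c5y - s5 * Rm * cos psi4) psi4 ae pex pey)
    as [x6 [y6 [a6 G6]]]; auto.
  destruct (concat _ _ _ _ _ _ _ _ _ _ _ _ _ _ _ HR G5 G6) as [x56 [y56 [a56 [G56 _]]]].
  destruct (concat _ _ _ _ _ _ _ _ _ _ _ _ _ _ _ HR G4 G56) as [x46 [y46 [a46 [G46 _]]]].
  destruct (concat _ _ _ _ _ _ _ _ _ _ _ _ _ _ _ HR G3 G46) as [x36 [y36 [a36 [G36 [P36 _]]]]].
  destruct (concat _ _ _ _ _ _ _ _ _ _ _ _ _ _ _ HR G2 G36) as [x26 [y26 [a26 [G26 [_ P26]]]]].
  destruct (concat _ _ _ _ _ _ _ _ _ _ _ _ _ _ _ HR G1 G26) as [x16 [y16 [a16 [G16 [_ P16]]]]].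
  exists x16, y16, a16. split; auto.
  apply P16, P26, P36. eapply good_passes_end; eauto.
Qed.

Lemma abs_mul_le1 (p q : R) : Rabs p <= 1 -> Rabs (p * q) <= Rabs q.
Proof.
  intros Hp. rewrite Rabs_mult. pose proof (Rabs_pos q). pose proof (Rabs_pos p). nra.
Qed.

Lemma sin_taylor (x d : R) : Rabs d <= 1 ->
  Rabs (sin (x + d) - sin x - d * cos x) <= d ^ 2.
Proof.
  intros Hd. rewrite sin_plus.
  replace (sin x * cos d + cos x * sin d - sin x - d * cos x)
    with (sin x * (cos d - 1) + cos x * (sin d - d)) by ring.
  eapply Rle_trans; [apply Rabs_triang|].
  assert (Hs : Rabs (sin x) <= 1) by (apply Rabs_le; apply SIN_bound).
  assert (Hc : Rabs (cos x) <= 1) by (apply Rabs_le; apply COS_bound).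
  pose proof (abs_mul_le1 _ (cos d - 1) Hs).
  pose proof (abs_mul_le1 _ (sin d - d) Hc).
  pose proof (one_minus_cos d). pose proof (sin_minus_id d).
  rewrite (Rabs_left1 (cos d - 1)) in H by lra.
  assert (Rabs d ^ 3 <= Rabs d ^ 2).
  { pose proof (Rabs_pos d). simpl. nra. }
  rewrite pow2_abs in H3. lra.
Qed.

Lemma abs_le_2sin (D : R) : Rabs D <= 1 -> Rabs D <= 2 * Rabs (sin D).
Proof.
  intros HD. pose proof (sin_minus_id D).
  assert (Rabs D ^ 3 <= Rabs D) by (pose proof (Rabs_pos D); simpl; nra).
  assert (Rabs (sin D - D) <= Rabs D / 2) by lra.
  pose proof (Rabs_triang_inv D (D - sin D)).
  replace (D - (D - sin D)) with (sin D) in H2 by ring.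
  rewrite Rabs_minus_sym in H1. lra.
Qed.

Lemma cos_lt_1 (x : R) : 0 < x < 2 * PI -> cos x < 1.
Proof.
  intros Hx. replace x with (2 * (x/2)) by field. rewrite cos_2a_sin.
  assert (0 < sin (x/2)) by (apply sin_gt_0; lra). nra.
Qed.

Lemma one_minus_cos_abs (D : R) : Rabs (1 - cos D) <= D ^ 2 / 2.
Proof. pose proof (one_minus_cos D). rewrite Rabs_right; lra. Qed.

Lemma Rabs_le_inv (a b : R) : Rabs a <= b -> - b <= a <= b.
Proof. unfold Rabs; destruct Rcase_abs; intros; lra. Qed.

Lemma Rabs_div (a b : R) : b <> 0 -> Rabs (a / b) = Rabs a / Rabs b.
Proof. intros. unfold Rdiv. rewrite Rabs_mult, Rabs_inv. reflexivity. Qed.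

Lemma atan_cos_sin (N D S : R) : 0 < D -> 0 < S -> D^2 + N^2 = S^2 ->
  cos (atan (N / D)) = D / S /\ sin (atan (N / D)) = N / S.
Proof.
  intros HD HS HE.
  assert (Hq : sqrt (1 + (N / D)²) = S / D).
  { replace (1 + (N / D)²) with ((S / D) ^ 2).
    - apply sqrt_pow2. apply Rlt_le, Rdiv_lt_0_compat; lra.
    - unfold Rsqr. field_simplify; [|lra|lra]. rewrite <- HE. field. lra. }
  rewrite cos_atan, sin_atan, Hq. split; field; lra.
Qed.

Lemma solve_polar (l0 k : R) : 0 < l0 ->
  exists K e0, 0 < K /\ 0 < e0 /\ forall X Y e, 0 <= e <= e0 ->
    Rabs (X - l0) <= e -> Rabs (Y - k) <= e ->
    exists l D, l0 / 2 <= l <= 2 * l0 /\ Rabs D <= K * e /\ Rabs D <= 1 /\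
      X = l * cos D - k * sin D /\ Y = l * sin D + k * cos D.
Proof.
  intros Hl0.
  set (ak := Rabs k).
  assert (Hak : 0 <= ak) by apply Rabs_pos.
  assert (Hkk : k * k = ak * ak) by (unfold ak; rewrite <- Rabs_mult, Rabs_right; nra).
  set (C1 := 3 * l0 + 2 * ak).
  set (Cn := ak * C1 / l0 + 2 * l0 + ak).
  assert (HC1 : 0 < C1) by (unfold C1; lra).
  assert (HCn : 0 < Cn) by (unfold Cn; assert (0 <= ak * C1 / l0) by (apply Rmult_le_pos; [nra|left; apply Rinv_0_lt_compat; lra]); lra).
  set (K := 4 * Cn / l0 ^ 2 + 1).
  assert (HK : 0 < K) by (unfold K; assert (0 < 4 * Cn / l0^2) by (apply Rdiv_lt_0_compat; nra); lra).
  set (e0 := Rmin (Rmin (l0 / 16) (l0 ^ 2 / (2 * C1))) (Rmin (l0 ^ 2 / (8 * (ak + 1))) (/ K))).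
  assert (He0 : 0 < e0).
  { unfold e0. repeat apply Rmin_pos; try apply Rdiv_lt_0_compat; try nra.
    apply Rinv_0_lt_compat; lra. }
  exists K, e0. split; [auto|split; [auto|]].
  intros X Y e He HX HY.
  assert (Hea : e <= l0 / 16) by (unfold e0 in He; pose proof (Rmin_l (Rmin (l0 / 16) (l0 ^ 2 / (2 * C1))) (Rmin (l0 ^ 2 / (8 * (ak + 1))) (/ K))); pose proof (Rmin_l (l0/16) (l0 ^ 2 / (2 * C1))); lra).
  assert (Heb : e <= l0 ^ 2 / (2 * C1)) by (unfold e0 in He; pose proof (Rmin_l (Rmin (l0 / 16) (l0 ^ 2 / (2 * C1))) (Rmin (l0 ^ 2 / (8 * (ak + 1))) (/ K))); pose proof (Rmin_r (l0/16) (l0 ^ 2 / (2 * C1))); lra).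
  assert (Hec : e <= l0 ^ 2 / (8 * (ak + 1))) by (unfold e0 in He; pose proof (Rmin_r (Rmin (l0 / 16) (l0 ^ 2 / (2 * C1))) (Rmin (l0 ^ 2 / (8 * (ak + 1))) (/ K))); pose proof (Rmin_l (l0 ^ 2 / (8 * (ak + 1))) (/ K)); lra).
  assert (Hed : e <= / K) by (unfold e0 in He; pose proof (Rmin_r (Rmin (l0 / 16) (l0 ^ 2 / (2 * C1))) (Rmin (l0 ^ 2 / (8 * (ak + 1))) (/ K))); pose proof (Rmin_r (l0 ^ 2 / (8 * (ak + 1))) (/ K)); lra).
  apply Rabs_le_inv in HX. apply Rabs_le_inv in HY.
  set (ex := X - l0). set (ey := Y - k).
  assert (HXe : X = l0 + ex) by (unfold ex; ring).
  assert (HYe : Y = k + ey) by (unfold ey; ring).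
  fold ex in HX. fold ey in HY.
  set (Q := X ^ 2 + Y ^ 2 - k ^ 2).
  assert (HQ1 : Rabs (Q - l0 ^ 2) <= C1 * e).
  { unfold Q, C1. rewrite HXe, HYe.
    replace ((l0 + ex) ^ 2 + (k + ey) ^ 2 - k ^ 2 - l0 ^ 2) with
      (2 * l0 * ex + ex ^ 2 + 2 * k * ey + ey ^ 2) by ring.
    assert (Rabs k = ak) by reflexivity.
    assert (Hkey : Rabs (k * ey) <= ak * e).
    { rewrite Rabs_mult. fold ak. apply Rmult_le_compat_l; auto. apply Rabs_le; lra. }
    apply Rabs_le_inv in Hkey.
    apply Rabs_le; split; nra. }
  assert (HC1e : C1 * e <= l0 ^ 2 / 2).
  { apply Rmult_le_compat_l with (r := C1) in Heb; [|lra].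
    replace (C1 * (l0 ^ 2 / (2 * C1))) with (l0 ^ 2 / 2) in Heb by (field; lra). lra. }
  apply Rabs_le_inv in HQ1.
  assert (HQpos : l0 ^ 2 / 2 <= Q) by lra.
  set (l := sqrt Q).
  assert (Hl2 : l ^ 2 = Q) by (apply pow2_sqrt; nra).
  assert (Hlpos : 0 <= l) by apply sqrt_pos.
  assert (Hlb : l0 / 2 <= l) by nra.
  assert (Hub : l <= 2 * l0) by nra.
  assert (Hll0 : Rabs (l - l0) <= C1 * e / l0).
  { assert (Hid : l - l0 = (Q - l0 ^ 2) / (l + l0)) by (rewrite <- Hl2; field; lra).
    rewrite Hid. rewrite Rabs_div by lra. rewrite (Rabs_right (l + l0)) by lra.
    apply Rabs_le in HQ1.
    apply Rle_trans with (C1 * e / (l + l0)).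
    - apply Rmult_le_compat_r; [left; apply Rinv_0_lt_compat; lra|auto].
    - apply Rmult_le_compat_l; [nra|]. apply Rinv_le_contravar; lra. }
  set (Dn := l * X + k * Y).
  set (Nn := l * Y - k * X).
  set (S := X ^ 2 + Y ^ 2).
  assert (HS : S = l ^ 2 + k ^ 2) by (unfold S; rewrite Hl2; unfold Q; ring).
  assert (HDn : l0 ^ 2 / 4 <= Dn).
  { unfold Dn. rewrite HXe, HYe.
    assert (Hkey : Rabs (k * ey) <= ak * e).
    { rewrite Rabs_mult. fold ak. apply Rmult_le_compat_l; auto. apply Rabs_le; lra. }
    apply Rabs_le_inv in Hkey.
    assert (ak * e <= l0 ^ 2 / 8).
    { apply Rle_trans with ((ak + 1) * e); [nra|].
      apply Rmult_le_compat_l with (r := ak + 1) in Hec; [|lra].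
      replace ((ak + 1) * (l0 ^ 2 / (8 * (ak + 1)))) with (l0 ^ 2 / 8) in Hec by (field; lra). lra. }
    nra. }
  assert (HSpos : 0 < S) by (rewrite HS; nra).
  assert (HE : Dn ^ 2 + Nn ^ 2 = S ^ 2) by (unfold Dn, Nn, S in *; rewrite HS; unfold S; nra).
  assert (HNn : Rabs Nn <= Cn * e).
  { unfold Nn. rewrite HXe, HYe.
    replace (l * (k + ey) - k * (l0 + ex)) with (k * (l - l0) + l * ey - k * ex) by ring.
    assert (H1 : Rabs (k * (l - l0)) <= ak * (C1 * e / l0)).
    { rewrite Rabs_mult. apply Rmult_le_compat_l; auto. }
    assert (H2 : Rabs (l * ey) <= 2 * l0 * e).
    { rewrite Rabs_mult, (Rabs_right l) by lra. apply Rmult_le_compat; try lra; try apply Rabs_pos.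
      apply Rabs_le; lra. }
    assert (H3 : Rabs (k * ex) <= ak * e).
    { rewrite Rabs_mult. apply Rmult_le_compat_l; auto. apply Rabs_le; lra. }
    eapply Rle_trans; [apply Rabs_triang|].
    eapply Rle_trans; [apply Rplus_le_compat; [apply Rabs_triang|rewrite Rabs_Ropp; exact H3]|].
    unfold Cn. replace (ak * (C1 * e / l0)) with (ak * C1 / l0 * e) in H1 by (field; lra).
    nra. }
  destruct (atan_cos_sin Nn Dn S ltac:(nra) HSpos HE) as [Hc Hs].
  exists l, (atan (Nn / Dn)). split; [lra|].
  assert (HD : Rabs (atan (Nn / Dn)) <= K * e).
  { eapply Rle_trans; [apply atan_abs_le|].
    rewrite Rabs_div by nra. rewrite (Rabs_right Dn) by nra.
    apply Rle_trans with (Cn * e / (l0 ^ 2 / 4)).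
    - apply Rle_trans with (Cn * e / Dn).
      + apply Rmult_le_compat_r; [left; apply Rinv_0_lt_compat; nra|auto].
      + apply Rmult_le_compat_l; [nra|]. apply Rinv_le_contravar; nra.
    - unfold K. replace (Cn * e / (l0 ^ 2 / 4)) with (4 * Cn / l0 ^ 2 * e) by (field; lra).
      nra. }
  split; [auto|split].
  - eapply Rle_trans; [exact HD|]. apply Rmult_le_compat_l with (r := K) in Hed; [|lra].
    rewrite Rinv_r in Hed; lra.
  - rewrite Hc, Hs. split.
    + apply Rmult_eq_reg_r with S; [|lra].
      field_simplify; [|lra]. unfold Dn, Nn. rewrite HS. ring_simplify. 
      replace (l ^ 2) with Q by auto. unfold Q. ring.
    + apply Rmult_eq_reg_r with S; [|lra].
      field_simplify; [|lra]. unfold Dn, Nn. rewrite HS. ring_simplify.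
      replace (l ^ 2) with Q by auto. unfold Q. ring.
Qed.

Lemma sc1 (x : R) : sin x ^ 2 + cos x ^ 2 = 1.
Proof. pose proof (sin2_cos2 x). unfold Rsqr in H. lra. Qed.

Lemma frame (ps Vx Vy l k D : R) :
  cos ps * Vx + sin ps * Vy = l * cos D - k * sin D ->
  - sin ps * Vx + cos ps * Vy = l * sin D + k * cos D ->
  Vx = l * cos (ps + D) - k * sin (ps + D) /\ Vy = l * sin (ps + D) + k * cos (ps + D).
Proof.
  intros H1 H2. rewrite cos_plus, sin_plus. pose proof (sc1 ps).
  split.
  - transitivity (cos ps * (cos ps * Vx + sin ps * Vy) - sin ps * (- sin ps * Vx + cos ps * Vy)).
    + transitivity ((sin ps ^ 2 + cos ps ^ 2) * Vx); [rewrite H; ring|ring].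
    + rewrite H1, H2. ring.
  - transitivity (sin ps * (cos ps * Vx + sin ps * Vy) + cos ps * (- sin ps * Vx + cos ps * Vy)).
    + transitivity ((sin ps ^ 2 + cos ps ^ 2) * Vy); [rewrite H; ring|ring].
    + rewrite H1, H2. ring.
Qed.

Lemma ident_X (ps th d l k s Rm : R) :
  cos ps * (l * cos ps - k * sin ps + s * Rm * (sin th - sin (th + d))) +
  sin ps * (l * sin ps + k * cos ps + s * Rm * (cos (th + d) - cos th)) =
  l + s * Rm * (sin (th - ps) - sin (th + d - ps)).
Proof.
  rewrite !sin_minus. pose proof (sc1 ps).
  transitivity (l * (sin ps ^ 2 + cos ps ^ 2) + s * Rm * (sin th * cos ps - cos th * sin ps - (sin (th + d) * cos ps - cos (th + d) * sin ps))); [ring|].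
  rewrite H. ring.
Qed.

Lemma ident_Y (ps th d l k s Rm : R) :
  - sin ps * (l * cos ps - k * sin ps + s * Rm * (sin th - sin (th + d))) +
  cos ps * (l * sin ps + k * cos ps + s * Rm * (cos (th + d) - cos th)) =
  k + s * Rm * (cos (th + d - ps) - cos (th - ps)).
Proof.
  rewrite !cos_minus. pose proof (sc1 ps).
  transitivity (k * (sin ps ^ 2 + cos ps ^ 2) + s * Rm * (cos (th + d) * cos ps + sin (th + d) * sin ps - (cos th * cos ps + sin th * sin ps))); [ring|].
  rewrite H. ring.
Qed.

Lemma abs_s (s : R) : (s = 1 \/ s = -1) -> Rabs s = 1.
Proof. intros [->| ->]; unfold Rabs; destruct Rcase_abs; lra. Qed.

Lemma half_step (Rm s l0 k ps th d K e0 : R) :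
  (forall X Y e, 0 <= e <= e0 ->
    Rabs (X - l0) <= e -> Rabs (Y - k) <= e ->
    exists l D, l0 / 2 <= l <= 2 * l0 /\ Rabs D <= K * e /\ Rabs D <= 1 /\
      X = l * cos D - k * sin D /\ Y = l * sin D + k * cos D) ->
  0 < Rm -> 0 < l0 -> (s = 1 \/ s = -1) -> Rm * Rabs d <= e0 ->
  exists m D, l0 / 2 <= m <= 2 * l0 /\ Rabs D <= K * (Rm * Rabs d) /\ Rabs D <= 1 /\
    l0 * cos ps - k * sin ps + s * Rm * (sin th - sin (th + d)) = m * cos (ps + D) - k * sin (ps + D) /\
    l0 * sin ps + k * cos ps + s * Rm * (cos (th + d) - cos th) = m * sin (ps + D) + k * cos (ps + D) /\
    m - k * D - l0 = s * Rm * (sin (th - ps) - sin (th + d - ps)) + (m * (1 - cos D) - k * (D - sin D)) /\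
    (th = ps -> Rabs D <= 2 / l0 * (Rm + Rabs k * (K * Rm) ^ 2) * d ^ 2).
Proof.
  intros Hsol HR Hl0 Hs Hd.
  set (X := l0 + s * Rm * (sin (th - ps) - sin (th + d - ps))).
  set (Y := k + s * Rm * (cos (th + d - ps) - cos (th - ps))).
  assert (Hs1 := abs_s s Hs).
  assert (HX : Rabs (X - l0) <= Rm * Rabs d).
  { unfold X. replace (l0 + s * Rm * (sin (th - ps) - sin (th + d - ps)) - l0)
      with (s * Rm * (sin (th - ps) - sin (th + d - ps))) by ring.
    rewrite !Rabs_mult, Hs1, (Rabs_right Rm) by lra.
    pose proof (sin_lip (th + d - ps) (th - ps)).
    replace (th - ps - (th + d - ps)) with (- d) in H by ring. rewrite Rabs_Ropp in H. nra. }
  assert (HY : Rabs (Y - k) <= Rm * Rabs d).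
  { unfold Y. replace (k + s * Rm * (cos (th + d - ps) - cos (th - ps)) - k)
      with (s * Rm * (cos (th + d - ps) - cos (th - ps))) by ring.
    rewrite !Rabs_mult, Hs1, (Rabs_right Rm) by lra.
    pose proof (cos_lip (th - ps) (th + d - ps)).
    replace (th + d - ps - (th - ps)) with d in H by ring. nra. }
  assert (He : 0 <= Rm * Rabs d <= e0) by (split; auto; apply Rmult_le_pos; [lra|apply Rabs_pos]).
  destruct (Hsol X Y (Rm * Rabs d) He HX HY) as [m [D [Hm [HD1 [HD2 [EX EY]]]]]].
  exists m, D. split; [auto|split; [auto|split; [auto|]]].
  destruct (frame ps (l0 * cos ps - k * sin ps + s * Rm * (sin th - sin (th + d)))
      (l0 * sin ps + k * cos ps + s * Rm * (cos (th + d) - cos th)) m k D) as [F1 F2].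
  { rewrite ident_X. fold X. auto. }
  { rewrite ident_Y. fold Y. auto. }
  split; [auto|split; [auto|split]].
  - transitivity ((X - l0) + (m * (1 - cos D) - k * (D - sin D))); [rewrite EX; ring|].
    unfold X. ring.
  - intros Hth. subst th.
    assert (HY0 : Y - k = s * Rm * (cos d - 1)).
    { unfold Y. replace (ps + d - ps) with d by ring. replace (ps - ps) with 0 by ring.
      rewrite cos_0. ring. }
    assert (Hmsin : m * sin D = (Y - k) + k * (1 - cos D)) by (rewrite EY; ring).
    assert (HA : Rabs (m * sin D) <= Rm * (d ^ 2 / 2) + Rabs k * (D ^ 2 / 2)).
    { rewrite Hmsin. eapply Rle_trans; [apply Rabs_triang|].
      apply Rplus_le_compat.
      - rewrite HY0, !Rabs_mult, Hs1, (Rabs_right Rm) by lra.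
        rewrite Rabs_minus_sym. pose proof (one_minus_cos_abs d). nra.
      - rewrite Rabs_mult. apply Rmult_le_compat_l; [apply Rabs_pos|apply one_minus_cos_abs]. }
    assert (HD2' : D ^ 2 <= (K * Rm) ^ 2 * d ^ 2).
    { rewrite <- (pow2_abs D), <- (pow2_abs d). pose proof (Rabs_pos D).
      replace ((K * Rm) ^ 2 * Rabs d ^ 2) with ((K * (Rm * Rabs d)) ^ 2) by ring.
      apply pow_incr. split; auto. }
    rewrite Rabs_mult, (Rabs_right m) in HA by lra.
    assert (Hsin : Rabs (sin D) <= (Rm * (d ^ 2 / 2) + Rabs k * ((K * Rm) ^ 2 * d ^ 2 / 2)) / m).
    { apply Rmult_le_reg_l with m; [lra|].
      replace (m * ((Rm * (d ^ 2 / 2) + Rabs k * ((K * Rm) ^ 2 * d ^ 2 / 2)) / m))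
        with (Rm * (d ^ 2 / 2) + Rabs k * ((K * Rm) ^ 2 * d ^ 2 / 2)) by (field; lra).
      pose proof (Rabs_pos k). nra. }
    pose proof (abs_le_2sin D HD2).
    assert (Hnum : 0 <= Rm * (d ^ 2 / 2) + Rabs k * ((K * Rm) ^ 2 * d ^ 2 / 2)).
    { pose proof (Rabs_pos k). assert (0 <= d^2) by nra. assert (0 <= (K*Rm)^2) by nra. nra. }
    assert ((Rm * (d ^ 2 / 2) + Rabs k * ((K * Rm) ^ 2 * d ^ 2 / 2)) / m <=
            (Rm * (d ^ 2 / 2) + Rabs k * ((K * Rm) ^ 2 * d ^ 2 / 2)) / (l0 / 2)).
    { apply Rmult_le_compat_l; [auto|]. apply Rinv_le_contravar; lra. }
    replace (2 / l0 * (Rm + Rabs k * (K * Rm) ^ 2) * d ^ 2) with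
      (2 * ((Rm * (d ^ 2 / 2) + Rabs k * ((K * Rm) ^ 2 * d ^ 2 / 2)) / (l0 / 2))) by (field; lra).
    lra.
Qed.

Lemma Ebound (l0 m k D : R) : 0 < l0 -> l0 / 2 <= m <= 2 * l0 -> Rabs D <= 1 ->
  Rabs (m * (1 - cos D) - k * (D - sin D)) <= (l0 + Rabs k) * D ^ 2.
Proof.
  intros Hl Hm HD.
  unfold Rminus at 1. eapply Rle_trans; [apply Rabs_triang|].
  rewrite Rabs_Ropp, !Rabs_mult, (Rabs_right m) by lra.
  pose proof (one_minus_cos_abs D). pose proof (sin_minus_id D).
  rewrite Rabs_minus_sym in H0.
  assert (Rabs D ^ 3 <= D ^ 2) by (rewrite <- pow2_abs; pose proof (Rabs_pos D); simpl; nra).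
  pose proof (Rabs_pos k). pose proof (Rabs_pos (1 - cos D)). pose proof (Rabs_pos (D - sin D)).
  assert (0 <= D^2) by nra.
  nra.
Qed.

Lemma pick2 (a b : R) : 0 < a -> 0 < b -> exists c, 0 < c /\ c <= a /\ c <= b.
Proof. intros. exists (Rmin a b). split; [apply Rmin_pos; auto|split; [apply Rmin_l|apply Rmin_r]]. Qed.

Lemma pm1_prod (s t : R) : (s = 1 \/ s = -1) -> (t = 1 \/ t = -1) -> (s * t = 1 \/ s * t = -1).
Proof. intros [->| ->] [->| ->]; [left|right|right|left]; ring. Qed.

Lemma cos_pm (s x : R) : (s = 1 \/ s = -1) -> cos (s * x) = cos x.
Proof. intros [->| ->]; [f_equal; ring|]. replace (-1 * x) with (- x) by ring. apply cos_neg. Qed.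

Lemma cos_1_cases (u : R) : 0 <= u -> cos u = 1 -> u = 0 \/ 2 * PI <= u.
Proof.
  intros Hu Hc. destruct (Rle_lt_dec (2 * PI) u); [right; auto|].
  destruct (Req_dec u 0); [left; auto|].
  exfalso. assert (cos u < 1) by (apply cos_lt_1; lra). lra.
Qed.

Lemma core (Rm s1 s3 s5 ps0 th ps4 u w l2 l4 k2 k4 T1 T5 : R) :
  0 < Rm -> (s1 = 1 \/ s1 = -1) -> (s3 = 1 \/ s3 = -1) -> (s5 = 1 \/ s5 = -1) ->
  0 < l2 -> 0 < l4 -> 0 < T1 -> 0 < T5 -> 0 <= u -> 0 <= w -> 0 < u + w ->
  th = ps0 + s3 * u -> ps4 = th + s3 * w ->
  (forall d D2 D4 m2 m4 j1 j2, (j1 = 0 \/ j1 = 1) -> (j2 = 0 \/ j2 = 1) -> 0 <= m2 -> 0 <= m4 ->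
    0 <= T1 + s1 * Rm * D2 -> 0 <= Rm * u + s3 * Rm * (d - D2) - 2 * PI * Rm * j1 ->
    0 <= Rm * w + s3 * Rm * (D4 - d) - 2 * PI * Rm * j2 -> 0 <= T5 - s5 * Rm * D4 ->
    l2 * cos ps0 - k2 * sin ps0 + s3 * Rm * (sin th - sin (th + d)) = m2 * cos (ps0 + D2) - k2 * sin (ps0 + D2) ->
    l2 * sin ps0 + k2 * cos ps0 + s3 * Rm * (cos (th + d) - cos th) = m2 * sin (ps0 + D2) + k2 * cos (ps0 + D2) ->
    l4 * cos ps4 - k4 * sin ps4 + (- s3) * Rm * (sin th - sin (th + d)) = m4 * cos (ps4 + D4) - k4 * sin (ps4 + D4) ->
    l4 * sin ps4 + k4 * cos ps4 + (- s3) * Rm * (cos (th + d) - cos th) = m4 * sin (ps4 + D4) + k4 * cos (ps4 + D4) ->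
    l2 + l4 <= m2 + m4 - k2 * D2 - k4 * D4 - 2 * PI * Rm * (j1 + j2)) ->
  cos u = cos w /\ cos u <> 1.
Proof.
  intros HR Hs1 Hs3 Hs5 Hl2 Hl4 HT1 HT5 Hu Hw Huw Hth Hps4 Hor.
  assert (HPI := PI_RGT_0).
  assert (Hmain : cos u = cos w).
  { destruct (Req_dec (cos u) (cos w)) as [E|NE]; auto. exfalso.
    destruct (solve_polar l2 k2 Hl2) as [K2 [e2 [HK2 [He2 Hsol2]]]].
    destruct (solve_polar l4 k4 Hl4) as [K4 [e4 [HK4 [He4 Hsol4]]]].
    set (a := Rm * (cos w - cos u)).
    assert (Ha : a <> 0) by (unfold a; intro Z; apply NE; apply Rmult_integral in Z; lra).
    assert (Hsig : exists sg, (sg = 1 \/ sg = -1) /\ s3 * sg * a < 0).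
    { destruct (Rlt_dec 0 (s3 * a)).
      - exists (-1). split; [right; reflexivity|]. lra.
      - exists 1. split; [left; reflexivity|].
        assert (s3 * a <> 0) by (destruct Hs3; subst; lra). lra. }
    destruct Hsig as [sg [Hsg Hsga]].
    set (A := - (s3 * sg * a)).
    assert (HA : 0 < A) by (unfold A; lra).
    set (CE := 2 * Rm + (l2 + Rabs k2) * (K2 * Rm) ^ 2 + (l4 + Rabs k4) * (K4 * Rm) ^ 2).
    assert (HCE : 0 < CE).
    { unfold CE. pose proof (Rabs_pos k2). pose proof (Rabs_pos k4).
      assert (0 <= (K2 * Rm)^2) by apply pow2_ge_0. assert (0 <= (K4 * Rm)^2) by apply pow2_ge_0.
      assert (0 <= (l2 + Rabs k2) * (K2 * Rm) ^ 2) by (apply Rmult_le_pos; lra).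
      assert (0 <= (l4 + Rabs k4) * (K4 * Rm) ^ 2) by (apply Rmult_le_pos; lra). lra. }
    set (CR2 := 2 / l2 * (Rm + Rabs k2 * (K2 * Rm) ^ 2)).
    set (CR4 := 2 / l4 * (Rm + Rabs k4 * (K4 * Rm) ^ 2)).
    assert (HCR2 : 0 < CR2).
    { unfold CR2. pose proof (Rabs_pos k2). assert (0 <= (K2 * Rm)^2) by apply pow2_ge_0.
      assert (0 <= Rabs k2 * (K2 * Rm) ^ 2) by (apply Rmult_le_pos; lra).
      apply Rmult_lt_0_compat; [apply Rdiv_lt_0_compat; lra|lra]. }
    assert (HCR4 : 0 < CR4).
    { unfold CR4. pose proof (Rabs_pos k4). assert (0 <= (K4 * Rm)^2) by apply pow2_ge_0.
      assert (0 <= Rabs k4 * (K4 * Rm) ^ 2) by (apply Rmult_le_pos; lra).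
      apply Rmult_lt_0_compat; [apply Rdiv_lt_0_compat; lra|lra]. }
    assert (HK2R : 0 < K2 * Rm) by (apply Rmult_lt_0_compat; lra).
    assert (HK4R : 0 < K4 * Rm) by (apply Rmult_lt_0_compat; lra).
    assert (HRK2 : 0 < Rm * (K2 * Rm)) by (apply Rmult_lt_0_compat; lra).
    assert (HRK4 : 0 < Rm * (K4 * Rm)) by (apply Rmult_lt_0_compat; lra).
    assert (HbU : exists bU, 0 < bU /\ (0 < u -> bU * (Rm + Rm * (K2 * Rm)) <= Rm * u)).
    { destruct (Rlt_dec 0 u).
      - exists (u / (1 + K2 * Rm)). split.
        + apply Rdiv_lt_0_compat; lra.
        + intros _. replace (u / (1 + K2 * Rm) * (Rm + Rm * (K2 * Rm))) with (Rm * u) by (field; lra). lra.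
      - exists 1. split; [lra|]. intros; lra. }
    assert (HbW : exists bW, 0 < bW /\ (0 < w -> bW * (Rm + Rm * (K4 * Rm)) <= Rm * w)).
    { destruct (Rlt_dec 0 w).
      - exists (w / (1 + K4 * Rm)). split.
        + apply Rdiv_lt_0_compat; lra.
        + intros _. replace (w / (1 + K4 * Rm) * (Rm + Rm * (K4 * Rm))) with (Rm * w) by (field; lra). lra.
      - exists 1. split; [lra|]. intros; lra. }
    destruct HbU as [bU [HbU HbU']]. destruct HbW as [bW [HbW HbW']].
    destruct (pick2 1 (e2 / Rm)) as [h1 [Hh1 [Hh1a Hh1b]]]; [lra|apply Rdiv_lt_0_compat; lra|].
    destruct (pick2 h1 (e4 / Rm)) as [h2 [Hh2 [Hh2a Hh2b]]]; [lra|apply Rdiv_lt_0_compat; lra|].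
    destruct (pick2 h2 (T1 / (Rm * (K2 * Rm)))) as [h3 [Hh3 [Hh3a Hh3b]]]; [lra|apply Rdiv_lt_0_compat; lra|].
    destruct (pick2 h3 (T5 / (Rm * (K4 * Rm)))) as [h4 [Hh4 [Hh4a Hh4b]]]; [lra|apply Rdiv_lt_0_compat; lra|].
    destruct (pick2 h4 (A / (2 * CE))) as [h5 [Hh5 [Hh5a Hh5b]]]; [lra|apply Rdiv_lt_0_compat; lra|].
    destruct (pick2 h5 (/ CR2)) as [h6 [Hh6 [Hh6a Hh6b]]]; [lra|apply Rinv_0_lt_compat; lra|].
    destruct (pick2 h6 (/ CR4)) as [h7 [Hh7 [Hh7a Hh7b]]]; [lra|apply Rinv_0_lt_compat; lra|].
    destruct (pick2 h7 bU) as [h8 [Hh8 [Hh8a Hh8b]]]; [lra|lra|].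
    destruct (pick2 h8 bW) as [eta [Heta [Heta_a Heta_b]]]; [lra|lra|].
    assert (E1 : eta <= 1) by lra.
    assert (E2 : Rm * eta <= e2).
    { assert (eta <= e2 / Rm) by lra. apply Rmult_le_compat_l with (r := Rm) in H; [|lra].
      replace (Rm * (e2 / Rm)) with e2 in H by (field; lra). lra. }
    assert (E4 : Rm * eta <= e4).
    { assert (eta <= e4 / Rm) by lra. apply Rmult_le_compat_l with (r := Rm) in H; [|lra].
      replace (Rm * (e4 / Rm)) with e4 in H by (field; lra). lra. }
    assert (ET1 : Rm * (K2 * Rm) * eta <= T1).
    { assert (eta <= T1 / (Rm * (K2 * Rm))) by lra. apply Rmult_le_compat_l with (r := Rm * (K2 * Rm)) in H; [|lra].
      replace (Rm * (K2 * Rm) * (T1 / (Rm * (K2 * Rm)))) with T1 in H by (field; repeat split; lra). lra. }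
    assert (ET5 : Rm * (K4 * Rm) * eta <= T5).
    { assert (eta <= T5 / (Rm * (K4 * Rm))) by lra. apply Rmult_le_compat_l with (r := Rm * (K4 * Rm)) in H; [|lra].
      replace (Rm * (K4 * Rm) * (T5 / (Rm * (K4 * Rm)))) with T5 in H by (field; repeat split; lra). lra. }
    assert (ECE : CE * eta <= A / 2).
    { assert (eta <= A / (2 * CE)) by lra. apply Rmult_le_compat_l with (r := CE) in H; [|lra].
      replace (CE * (A / (2 * CE))) with (A / 2) in H by (field; lra). lra. }
    assert (ECR2 : CR2 * eta <= 1).
    { assert (eta <= / CR2) by lra. apply Rmult_le_compat_l with (r := CR2) in H; [|lra].
      rewrite Rinv_r in H; lra. }
    assert (ECR4 : CR4 * eta <= 1).
    { assert (eta <= / CR4) by lra. apply Rmult_le_compat_l with (r := CR4) in H; [|lra].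
      rewrite Rinv_r in H; lra. }
    assert (EU : 0 < u -> eta * (Rm + Rm * (K2 * Rm)) <= Rm * u).
    { intros Hu'. specialize (HbU' Hu').
      assert (eta * (Rm + Rm * (K2 * Rm)) <= bU * (Rm + Rm * (K2 * Rm))) by (apply Rmult_le_compat_r; lra). lra. }
    assert (EW : 0 < w -> eta * (Rm + Rm * (K4 * Rm)) <= Rm * w).
    { intros Hw'. specialize (HbW' Hw').
      assert (eta * (Rm + Rm * (K4 * Rm)) <= bW * (Rm + Rm * (K4 * Rm))) by (apply Rmult_le_compat_r; lra). lra. }
    set (d := sg * eta).
    assert (Hd : Rabs d = eta) by (unfold d; rewrite Rabs_mult, abs_s by auto; rewrite Rabs_right; lra).
    destruct (half_step Rm s3 l2 k2 ps0 th d K2 e2 Hsol2 HR Hl2 Hs3 ltac:(rewrite Hd; lra))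
      as [m2 [D2 [Hm2 [HD2a [HD2b [EQ1 [EQ2 [LEN2 REF2]]]]]]]].
    assert (Hms3 : - s3 = 1 \/ - s3 = -1) by (destruct Hs3; [right|left]; lra).
    destruct (half_step Rm (- s3) l4 k4 ps4 th d K4 e4 Hsol4 HR Hl4 Hms3 ltac:(rewrite Hd; lra))
      as [m4 [D4 [Hm4 [HD4a [HD4b [EQ3 [EQ4 [LEN4 REF4]]]]]]]].
    rewrite Hd in HD2a, HD4a.
    revert EQ1 EQ2 EQ3 EQ4 LEN2 LEN4.
    assert (Hs1a := abs_s s1 Hs1). assert (Hs3a := abs_s s3 Hs3). assert (Hs5a := abs_s s5 Hs5).
    assert (Horr := Hor d D2 D4 m2 m4 0 0 ltac:(lra) ltac:(lra) ltac:(lra) ltac:(lra)).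
    assert (Hsd : s3 * d = s3 * sg * eta) by (unfold d; ring).
    assert (Hss : s3 * sg = 1 \/ s3 * sg = -1) by (apply pm1_prod; auto).
    assert (B2r : Rm * Rabs D2 <= Rm * (K2 * Rm) * eta).
    { replace (Rm * (K2 * Rm) * eta) with (Rm * (K2 * (Rm * eta))) by ring.
      apply Rmult_le_compat_l; lra. }
    assert (B4r : Rm * Rabs D4 <= Rm * (K4 * Rm) * eta).
    { replace (Rm * (K4 * Rm) * eta) with (Rm * (K4 * (Rm * eta))) by ring.
      apply Rmult_le_compat_l; lra. }
    assert (Ab : forall s z, (s = 1 \/ s = -1) -> Rabs (s * Rm * z) = Rm * Rabs z).
    { intros s z Hs. rewrite !Rabs_mult, (abs_s s Hs), (Rabs_right Rm) by lra. ring. }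
    assert (C1 : 0 <= T1 + s1 * Rm * D2).
    { pose proof (Rabs_le_inv (s1 * Rm * D2) _ (Rle_refl _)). rewrite Ab in H by auto. clear - H B2r ET1; lra. }
    assert (C4 : 0 <= T5 - s5 * Rm * D4).
    { pose proof (Rabs_le_inv (s5 * Rm * D4) _ (Rle_refl _)). rewrite Ab in H by auto. clear - H B4r ET5; lra. }
    assert (C2 : 0 <= Rm * u + s3 * Rm * (d - D2) - 2 * PI * Rm * 0).
    { destruct (Rlt_dec 0 u) as [Hup|Hun].
      - specialize (EU Hup).
        pose proof (Rabs_le_inv (s3 * Rm * (d - D2)) _ (Rle_refl _)). rewrite Ab in H by auto.
        assert (Rm * Rabs (d - D2) <= Rm * eta + Rm * Rabs D2).
        { unfold Rminus. rewrite <- Hd, <- (Rabs_Ropp D2), <- Rmult_plus_distr_l.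
          apply Rmult_le_compat_l; [lra|apply Rabs_triang]. }
        clear - H H0 EU B2r. lra.
      - assert (u = 0) by lra. subst u.
        assert (Hthp : th = ps0) by (rewrite Hth; ring).
        specialize (REF2 Hthp). fold CR2 in REF2.
        replace (d ^ 2) with (eta ^ 2) in REF2 by (rewrite <- Hd, pow2_abs; reflexivity).
        assert (HCe : CR2 * eta ^ 2 <= eta).
        { assert (Z : CR2 * eta * eta <= 1 * eta) by (apply Rmult_le_compat_r; lra).
          replace (CR2 * eta ^ 2) with (CR2 * eta * eta) by ring. lra. }
        assert (Hcw : cos w < 1) by (rewrite cos_0 in NE; pose proof (COS_bound w); lra).
        assert (Hapos : a < 0).
        { unfold a. rewrite cos_0. assert (0 < Rm * (1 - cos w)) by (apply Rmult_lt_0_compat; lra). lra. }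
        assert (Hs3sg : s3 * sg = 1) by (destruct Hss as [Z|Z]; auto; rewrite Z in Hsga; lra).
        assert (Q1 : s3 * d = eta) by (rewrite Hsd, Hs3sg; ring).
        pose proof (Rabs_le_inv (s3 * D2) _ (Rle_refl _)) as Q2. rewrite Rabs_mult, Hs3a in Q2.
        assert (HdD : Rabs D2 <= eta) by (clear - REF2 HCe; lra).
        assert (Q3 : Rm * (s3 * D2) <= Rm * (1 * Rabs D2)) by (apply Rmult_le_compat_l; lra).
        assert (Q4 : 0 <= Rm * (eta - Rabs D2)) by (apply Rmult_le_pos; lra).
        replace (Rm * 0 + s3 * Rm * (d - D2) - 2 * PI * Rm * 0) with (Rm * (s3 * d) - Rm * (s3 * D2)) by ring.
        rewrite Q1. clear - Q3 Q4. lra. }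
    assert (C3 : 0 <= Rm * w + s3 * Rm * (D4 - d) - 2 * PI * Rm * 0).
    { destruct (Rlt_dec 0 w) as [Hwp|Hwn].
      - specialize (EW Hwp).
        pose proof (Rabs_le_inv (s3 * Rm * (D4 - d)) _ (Rle_refl _)). rewrite Ab in H by auto.
        assert (Rm * Rabs (D4 - d) <= Rm * Rabs D4 + Rm * eta).
        { unfold Rminus. rewrite <- Hd, <- (Rabs_Ropp d), <- Rmult_plus_distr_l.
          apply Rmult_le_compat_l; [lra|apply Rabs_triang]. }
        clear - H H0 EW B4r. lra.
      - assert (w = 0) by lra. subst w.
        assert (Hthp : th = ps4) by (rewrite Hps4; ring).
        specialize (REF4 Hthp). fold CR4 in REF4.
        replace (d ^ 2) with (eta ^ 2) in REF4 by (rewrite <- Hd, pow2_abs; reflexivity).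
        assert (HCe : CR4 * eta ^ 2 <= eta).
        { assert (Z : CR4 * eta * eta <= 1 * eta) by (apply Rmult_le_compat_r; lra).
          replace (CR4 * eta ^ 2) with (CR4 * eta * eta) by ring. lra. }
        assert (Hcu : cos u < 1) by (rewrite cos_0 in NE; pose proof (COS_bound u); lra).
        assert (Hapos : 0 < a).
        { unfold a. rewrite cos_0. assert (0 < Rm * (1 - cos u)) by (apply Rmult_lt_0_compat; lra). lra. }
        assert (Hs3sg : s3 * sg = -1) by (destruct Hss as [Z|Z]; auto; rewrite Z in Hsga; lra).
        assert (Q1 : s3 * d = - eta) by (rewrite Hsd, Hs3sg; ring).
        pose proof (Rabs_le_inv (s3 * D4) _ (Rle_refl _)) as Q2. rewrite Rabs_mult, Hs3a in Q2.
        assert (HdD : Rabs D4 <= eta) by (clear - REF4 HCe; lra).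
        assert (Q3 : Rm * (- (1 * Rabs D4)) <= Rm * (s3 * D4)) by (apply Rmult_le_compat_l; lra).
        assert (Q4 : 0 <= Rm * (eta - Rabs D4)) by (apply Rmult_le_pos; lra).
        replace (Rm * 0 + s3 * Rm * (D4 - d) - 2 * PI * Rm * 0) with (Rm * (s3 * D4) - Rm * (s3 * d)) by ring.
        rewrite Q1. clear - Q3 Q4. lra. }
    intros EQ1 EQ2 EQ3 EQ4 LEN2 LEN4.
    specialize (Horr C1 C2 C3 C4 EQ1 EQ2 EQ3 EQ4). clear EQ1 EQ2 EQ3 EQ4 Hor Hsol2 Hsol4.
    assert (Hsum : 0 <= (m2 - k2 * D2 - l2) + (m4 - k4 * D4 - l4)) by lra.
    rewrite LEN2, LEN4 in Hsum.
    pose proof (Ebound l2 m2 k2 D2 Hl2 Hm2 HD2b) as EB2.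
    pose proof (Ebound l4 m4 k4 D4 Hl4 Hm4 HD4b) as EB4.
    assert (HD2sq : D2 ^ 2 <= (K2 * Rm) ^ 2 * eta ^ 2).
    { rewrite <- (pow2_abs D2). pose proof (Rabs_pos D2).
      replace ((K2 * Rm) ^ 2 * eta ^ 2) with ((K2 * (Rm * eta)) ^ 2) by ring.
      apply pow_incr. split; auto. }
    assert (HD4sq : D4 ^ 2 <= (K4 * Rm) ^ 2 * eta ^ 2).
    { rewrite <- (pow2_abs D4). pose proof (Rabs_pos D4).
      replace ((K4 * Rm) ^ 2 * eta ^ 2) with ((K4 * (Rm * eta)) ^ 2) by ring.
      apply pow_incr. split; auto. }
    assert (Hd1 : Rabs d <= 1) by (rewrite Hd; clear - E1; lra).
    pose proof (sin_taylor (s3 * u) d Hd1) as TY1.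
    pose proof (sin_taylor (- (s3 * w)) d Hd1) as TY2.
    assert (Ea : th - ps0 = s3 * u) by (rewrite Hth; ring).
    assert (Eb : th + d - ps0 = s3 * u + d) by (rewrite Hth; ring).
    assert (Ec : th - ps4 = - (s3 * w)) by (rewrite Hps4; ring).
    assert (Ed : th + d - ps4 = - (s3 * w) + d) by (rewrite Hps4; ring).
    rewrite Ea, Eb, Ec, Ed in Hsum.
    rewrite (cos_pm s3 u Hs3) in TY1.
    rewrite cos_neg, (cos_pm s3 w Hs3) in TY2.
    set (r1 := sin (s3 * u + d) - sin (s3 * u) - d * cos u) in *.
    set (r2 := sin (- (s3 * w) + d) - sin (- (s3 * w)) - d * cos w) in *.
    assert (Hmainexp : s3 * Rm * (sin (s3 * u) - sin (s3 * u + d)) + - s3 * Rm * (sin (- (s3 * w)) - sin (- (s3 * w) + d))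
             = - A * eta + s3 * Rm * (r2 - r1)).
    { unfold r1, r2, A, a, d. ring. }
    assert (Hrr : s3 * Rm * (r2 - r1) <= 2 * Rm * eta ^ 2).
    { pose proof (Rle_abs (s3 * Rm * (r2 - r1))) as W1. rewrite Ab in W1 by auto.
      assert (W2 : Rabs (r2 - r1) <= 2 * eta ^ 2).
      { unfold Rminus at 1. eapply Rle_trans; [apply Rabs_triang|]. rewrite Rabs_Ropp.
        replace (d ^ 2) with (eta ^ 2) in TY1, TY2 by (rewrite <- Hd, pow2_abs; reflexivity). clear - TY1 TY2; lra. }
      assert (W3 : Rm * Rabs (r2 - r1) <= Rm * (2 * eta ^ 2)) by (apply Rmult_le_compat_l; [clear - HR; lra|exact W2]).
      clear - W1 W3; lra. }
    apply Rabs_le_inv in EB2. apply Rabs_le_inv in EB4.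
    assert (HE2 : (l2 + Rabs k2) * D2 ^ 2 <= (l2 + Rabs k2) * ((K2 * Rm) ^ 2 * eta ^ 2)).
    { apply Rmult_le_compat_l; auto. pose proof (Rabs_pos k2). clear - H Hl2; lra. }
    assert (HE4 : (l4 + Rabs k4) * D4 ^ 2 <= (l4 + Rabs k4) * ((K4 * Rm) ^ 2 * eta ^ 2)).
    { apply Rmult_le_compat_l; auto. pose proof (Rabs_pos k4). clear - H Hl4; lra. }
    assert (HCEe : CE * eta ^ 2 <= A / 2 * eta).
    { replace (CE * eta ^ 2) with ((CE * eta) * eta) by ring. apply Rmult_le_compat_r; [clear - Heta; lra|exact ECE]. }
    assert (HAe : 0 < A * eta) by (apply Rmult_lt_0_compat; clear - HA Heta; lra).
    unfold CE in HCEe.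
    clear - Hsum Hmainexp Hrr EB2 EB4 HE2 HE4 HCEe HAe.
    lra.
  }
  split; auto. intros Hc1.
  assert (Hc2 : cos w = 1) by lra.
  destruct (cos_1_cases u Hu Hc1) as [Hu0|Hu2].
  - destruct (cos_1_cases w Hw Hc2) as [Hw0|Hw2]; [lra|].
    assert (H := Hor 0 0 0 l2 l4 0 1 ltac:(lra) ltac:(lra) ltac:(lra) ltac:(lra)).
    rewrite !Rplus_0_r in H.
    assert (l2 + l4 <= l2 + l4 - k2 * 0 - k4 * 0 - 2 * PI * Rm * (0 + 1)).
    { apply H; try ring; nra. }
    nra.
  - assert (H := Hor 0 0 0 l2 l4 1 0 ltac:(lra) ltac:(lra) ltac:(lra) ltac:(lra)).
    rewrite !Rplus_0_r in H.
    assert (l2 + l4 <= l2 + l4 - k2 * 0 - k4 * 0 - 2 * PI * Rm * 1).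
    { apply H; try ring; nra. }
    nra.
Qed.

Lemma pdist_sq (p q : pt) : pdist p q ^ 2 = (fst p - fst q) ^ 2 + (snd p - snd q) ^ 2.
Proof. unfold pdist. apply pow2_sqrt. apply Rplus_le_le_0_compat; apply pow2_ge_0. Qed.

Lemma sumsq0 (a b : R) : a ^ 2 + b ^ 2 = 0 -> a = 0 /\ b = 0.
Proof.
  intros H. pose proof (pow2_ge_0 a). pose proof (pow2_ge_0 b).
  split; apply Rsqr_0_uniq; unfold Rsqr; simpl in *; lra.
Qed.

Lemma sqrt_eq_pos (q rho : R) : 0 <= rho -> q = rho ^ 2 -> sqrt q = rho.
Proof. intros H ->. apply sqrt_pow2; auto. Qed.

Lemma inv_circle (ox oy px py ps l r : R) :
  l <> 0 -> 0 < r ->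
  - sin ps * (ox - px) + cos ps * (oy - py) <> 0 ->
  is_circle_off (ox, oy)
    (inverse_set (ox, oy) r (line_through (px, py) (px + l * cos ps, py + l * sin ps)))
    (ox + r ^ 2 / (2 * (- sin ps * (ox - px) + cos ps * (oy - py))) * sin ps,
     oy - r ^ 2 / (2 * (- sin ps * (ox - px) + cos ps * (oy - py))) * cos ps)
    (r ^ 2 / (2 * Rabs (- sin ps * (ox - px) + cos ps * (oy - py)))).
Proof.
  intros Hl Hr Hh.
  set (h := - sin ps * (ox - px) + cos ps * (oy - py)) in *.
  set (cs := cos ps) in *. set (sn := sin ps) in *.
  assert (Hcs : sn ^ 2 + cs ^ 2 = 1) by (unfold sn, cs; apply sc1).
  assert (Hah : 0 < Rabs h) by (apply Rabs_pos_lt; auto).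
  assert (Hh2 : Rabs h ^ 2 = h ^ 2) by apply pow2_abs.
  assert (Hah' : Rabs h <> 0) by lra.
  split.
  { apply Rdiv_lt_0_compat; nra. }
  intros [yx yy] HYO. split.
  - intros [[xx xy] [[s Hs] [HXO HY]]].
    injection Hs as Hs1 Hs2.
    unfold inversion in HY. rewrite pdist_sq in HY. simpl in HY.
    injection HY as HY1 HY2.
    set (m := (ox - xx) ^ 2 + (oy - xy) ^ 2) in *.
    assert (Hm : m <> 0).
    { intro Z. apply HXO. unfold m in Z. apply sumsq0 in Z. f_equal; lra. }
    apply sqrt_eq_pos; [apply Rlt_le, Rdiv_lt_0_compat; nra|]. cbn [fst snd].
    rewrite HY1, HY2.
    replace ((r ^ 2 / (2 * Rabs h)) ^ 2) with (r ^ 4 / (4 * h ^ 2) * (sn ^ 2 + cs ^ 2))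
      by (rewrite Hcs, <- Hh2; field; lra).
    subst xx xy. unfold m in *. unfold h in *. field. split; auto. intro Z; apply Hm; lra.
  - intros Hd. unfold pdist in Hd. cbn [fst snd] in Hd.
    set (m := (yx - ox) ^ 2 + (yy - oy) ^ 2).
    assert (Hmp : 0 < m).
    { assert (m <> 0).
      { intro Z. unfold m in Z. apply sumsq0 in Z. apply HYO. f_equal; lra. }
      pose proof (pow2_ge_0 (yx - ox)). pose proof (pow2_ge_0 (yy - oy)). unfold m in *. lra. }
    assert (Hq : (yx - (ox + r ^ 2 / (2 * h) * sn)) ^ 2 + (yy - (oy - r ^ 2 / (2 * h) * cs)) ^ 2
                 = (r ^ 2 / (2 * Rabs h)) ^ 2).
    { rewrite <- Hd. rewrite pow2_sqrt; [reflexivity|apply Rplus_le_le_0_compat; apply pow2_ge_0]. }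
    replace ((r ^ 2 / (2 * Rabs h)) ^ 2) with ((r ^ 2 / (2 * h)) ^ 2 * (sn ^ 2 + cs ^ 2)) in Hq
      by (rewrite Hcs; transitivity (r ^ 4 / (4 * h ^ 2)); [field; auto|rewrite <- Hh2; field; auto]).
    set (a := r ^ 2 / (2 * h)) in *.
    assert (Ha : a <> 0).
    { unfold a, Rdiv. intro Z. apply Rmult_integral in Z. destruct Z as [Z|Z].
      - assert (0 < r ^ 2) by (apply pow_lt; lra). lra.
      - revert Z. apply Rinv_neq_0_compat. intro Z. apply Hh. lra. }
    assert (Hq2 : m - 2 * a * ((yx - ox) * sn - (yy - oy) * cs) = 0) by (unfold m; lra).
    assert (Hkey : (yx - ox) * sn - (yy - oy) * cs = m * h / r ^ 2).
    { apply Rmult_eq_reg_l with (2 * a); [|lra].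
      transitivity m; [lra|]. unfold a. field. split; lra. }
    exists (ox + r ^ 2 / m * (yx - ox), oy + r ^ 2 / m * (yy - oy)).
    set (Xx := ox + r ^ 2 / m * (yx - ox)). set (Xy := oy + r ^ 2 / m * (yy - oy)).
    assert (Hw : (Xx - px) * sn - (Xy - py) * cs = 0).
    { replace ((Xx - px) * sn - (Xy - py) * cs) with (r ^ 2 / m * ((yx - ox) * sn - (yy - oy) * cs) - h)
        by (unfold Xx, Xy, h; ring).
      rewrite Hkey. field. split; lra. }
    split; [|split].
    + exists (((Xx - px) * cs + (Xy - py) * sn) / l). cbn [fst snd].
      f_equal.
      * apply Rminus_diag_uniq. 
        replace (Xx - (px + ((Xx - px) * cs + (Xy - py) * sn) / l * (px + l * cs - px)))
          with ((Xx - px) * (1 - (sn ^ 2 + cs ^ 2)) + sn * ((Xx - px) * sn - (Xy - py) * cs)) by (field; auto).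
        rewrite Hcs, Hw. ring.
      * apply Rminus_diag_uniq.
        replace (Xy - (py + ((Xx - px) * cs + (Xy - py) * sn) / l * (py + l * sn - py)))
          with ((Xy - py) * (1 - (sn ^ 2 + cs ^ 2)) - cs * ((Xx - px) * sn - (Xy - py) * cs)) by (field; auto).
        rewrite Hcs, Hw. ring.
    + intro Z. injection Z as Z1 Z2.
      assert (r ^ 2 / m * (yx - ox) = 0) by (unfold Xx in Z1; lra).
      assert (r ^ 2 / m * (yy - oy) = 0) by (unfold Xy in Z2; lra).
      assert (Hrm : r ^ 2 / m <> 0) by (apply Rgt_not_eq, Rdiv_lt_0_compat; nra).
      apply Rmult_integral in H. apply Rmult_integral in H0.
      destruct H; [contradiction|]. destruct H0; [contradiction|].
      apply HYO. f_equal; lra.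
    + unfold inversion. rewrite pdist_sq. cbn [fst snd].
      assert (Hm2 : (ox - Xx) ^ 2 + (oy - Xy) ^ 2 = r ^ 4 / m).
      { replace ((ox - Xx) ^ 2 + (oy - Xy) ^ 2) with ((r ^ 2 / m) ^ 2 * ((yx - ox) ^ 2 + (yy - oy) ^ 2))
          by (unfold Xx, Xy; field; lra).
        change ((yx - ox) ^ 2 + (yy - oy) ^ 2) with m. field. lra. }
      rewrite Hm2. f_equal; unfold Xx, Xy; field; split; lra.
Qed.

Lemma const_on (g : R -> R) (t0 t1 : R) : t0 <= t1 ->
  (forall c, t0 <= c <= t1 -> derivable_pt_lim g c 0) -> g t1 = g t0.
Proof.
  intros H Hd. assert (Hb := mvt_bound g (fun _ => 0) t0 t1 0).
  rewrite Rmin_left, Rmax_right in Hb by lra.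
  assert (Rabs (g t1 - g t0) <= 0 * Rabs (t1 - t0)).
  { apply Hb; auto. intros; rewrite Rabs_R0; lra. }
  rewrite Rmult_0_l in H0. pose proof (Rabs_pos (g t1 - g t0)).
  assert (Rabs (g t1 - g t0) = 0) by lra. apply Rabs_eq_0 in H2. lra.
Qed.

Lemma arc_pos (Rm L s t0 t1 : R) (x y a : R -> R) :
  0 < Rm -> (s = 1 \/ s = -1) -> dubins_traj Rm L x y a -> 0 <= t0 <= t1 -> t1 <= L ->
  (forall t, t0 <= t <= t1 -> a t = a t0 + s / Rm * (t - t0)) ->
  x t1 = x t0 + s * Rm * (sin (a t1) - sin (a t0)) /\
  y t1 = y t0 - s * Rm * (cos (a t1) - cos (a t0)).
Proof.
  intros HR Hs [_ [Hd _]] Ht Ht1 Ha.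
  assert (Hs2 : s * s = 1) by (destruct Hs; subst; ring).
  rewrite (Ha t1) by lra. 
  split.
  - assert (E := const_on (fun t => x t - s * Rm * sin (a t0 + s / Rm * (t - t0))) t0 t1 ltac:(lra)).
    cbv beta in E. replace (t0 - t0) with 0 in E by ring. rewrite Rmult_0_r, Rplus_0_r in E.
    assert (x t1 - s * Rm * sin (a t0 + s / Rm * (t1 - t0)) = x t0 - s * Rm * sin (a t0)).
    { apply E. intros c Hc. destruct (Hd c ltac:(lra)) as [Hx _].
      assert (Hc' := Ha c Hc).
      apply is_derive_Reals in Hx. apply is_derive_Reals.
      assert (D2 : is_derive (fun t => s * Rm * sin (a t0 + s / Rm * (t - t0))) c (cos (a c))).
      { auto_derive; auto. rewrite Hc'. unfold Rdiv, Rminus.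
        transitivity (s * s * (Rm * / Rm) * cos (a t0 + s * / Rm * (c + - t0))); [ring|].
        rewrite Hs2, Rinv_r; lra. }
      replace 0 with (cos (a c) - cos (a c)) by ring.
      apply (is_derive_minus x); auto. }
    lra.
  - assert (E := const_on (fun t => y t + s * Rm * cos (a t0 + s / Rm * (t - t0))) t0 t1 ltac:(lra)).
    cbv beta in E. replace (t0 - t0) with 0 in E by ring. rewrite Rmult_0_r, Rplus_0_r in E.
    assert (y t1 + s * Rm * cos (a t0 + s / Rm * (t1 - t0)) = y t0 + s * Rm * cos (a t0)).
    { apply E. intros c Hc. destruct (Hd c ltac:(lra)) as [_ Hy].
      assert (Hc' := Ha c Hc).
      apply is_derive_Reals in Hy. apply is_derive_Reals.
      assert (D2 : is_derive (fun t => s * Rm * cos (a t0 + s / Rm * (t - t0))) c (- sin (a c))).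
      { auto_derive; auto. rewrite Hc'. unfold Rdiv, Rminus.
        transitivity (- (s * s * (Rm * / Rm)) * sin (a t0 + s * / Rm * (c + - t0))); [ring|].
        rewrite Hs2, Rinv_r; lra. }
      replace 0 with (sin (a c) + - sin (a c)) by ring.
      apply (is_derive_plus y); auto. }
    lra.
Qed.

Lemma line_pos (Rm L t0 t1 : R) (x y a : R -> R) :
  dubins_traj Rm L x y a -> 0 <= t0 <= t1 -> t1 <= L ->
  (forall t, t0 <= t <= t1 -> a t = a t0) ->
  x t1 = x t0 + (t1 - t0) * cos (a t0) /\ y t1 = y t0 + (t1 - t0) * sin (a t0).
Proof.
  intros [_ [Hd _]] Ht Ht1 Ha.
  split.
  - assert (E := const_on (fun t => x t - t * cos (a t0)) t0 t1 ltac:(lra)).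
    cbv beta in E.
    assert (x t1 - t1 * cos (a t0) = x t0 - t0 * cos (a t0)).
    { apply E. intros c Hc. destruct (Hd c ltac:(lra)) as [Hx _].
      rewrite (Ha c Hc) in Hx.
      apply is_derive_Reals in Hx. apply is_derive_Reals.
      assert (D2 : is_derive (fun t => t * cos (a t0)) c (cos (a t0))) by (auto_derive; auto; ring).
      replace 0 with (cos (a t0) - cos (a t0)) by ring.
      apply (is_derive_minus x); auto. }
    lra.
  - assert (E := const_on (fun t => y t - t * sin (a t0)) t0 t1 ltac:(lra)).
    cbv beta in E.
    assert (y t1 - t1 * sin (a t0) = y t0 - t0 * sin (a t0)).
    { apply E. intros c Hc. destruct (Hd c ltac:(lra)) as [_ Hy].
      rewrite (Ha c Hc) in Hy.
      apply is_derive_Reals in Hy. apply is_derive_Reals.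
      assert (D2 : is_derive (fun t => t * sin (a t0)) c (sin (a t0))) by (auto_derive; auto; ring).
      replace 0 with (sin (a t0) - sin (a t0)) by ring.
      apply (is_derive_minus y); auto. }
    lra.
Qed.

Lemma per (z m : R) : (m = 0 \/ m = 1 \/ m = 2 \/ m = -1 \/ m = -2) ->
  sin (z - 2 * PI * m) = sin z /\ cos (z - 2 * PI * m) = cos z.
Proof.
  intros Hm.
  assert (P1 : forall w, sin (w + 2 * PI) = sin w /\ cos (w + 2 * PI) = cos w).
  { intros w. pose proof (sin_period w 1). pose proof (cos_period w 1). simpl INR in *.
    replace (2 * 1 * PI) with (2 * PI) in * by ring. auto. }
  destruct Hm as [->|[->|[->|[->| ->]]]].
  - replace (z - 2 * PI * 0) with z by ring. auto.
  - destruct (P1 (z - 2 * PI * 1)) as [A B]. replace (z - 2 * PI * 1 + 2 * PI) with z in * by ring. auto.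
  - destruct (P1 (z - 2 * PI * 2)) as [A B]. destruct (P1 (z - 2 * PI * 2 + 2 * PI)) as [C D].
    replace (z - 2 * PI * 2 + 2 * PI + 2 * PI) with z in * by ring. split; congruence.
  - destruct (P1 z) as [A B]. replace (z - 2 * PI * -1) with (z + 2 * PI) by ring. auto.
  - destruct (P1 z) as [A B]. destruct (P1 (z + 2 * PI)) as [C D].
    replace (z - 2 * PI * -2) with (z + 2 * PI + 2 * PI) by ring. split; congruence.
Qed.

Lemma kform (Rm k : R) : 0 < Rm -> (k = 1 / Rm \/ k = - (1 / Rm)) ->
  exists s, (s = 1 \/ s = -1) /\ k = s / Rm.
Proof.
  intros HR [->| ->]; [exists 1|exists (-1)]; split; auto; field; lra.
Qed.

Lemma sj_cases (s j : R) : (s = 1 \/ s = -1) -> (j = 0 \/ j = 1) ->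
  (s * j = 0 \/ s * j = 1 \/ s * j = 2 \/ s * j = -1 \/ s * j = -2).
Proof. intros [->| ->] [->| ->]; lra. Qed.

Lemma sJ_cases (s j1 j2 : R) : (s = 1 \/ s = -1) -> (j1 = 0 \/ j1 = 1) -> (j2 = 0 \/ j2 = 1) ->
  (s * (j1 + j2) = 0 \/ s * (j1 + j2) = 1 \/ s * (j1 + j2) = 2 \/ s * (j1 + j2) = -1 \/ s * (j1 + j2) = -2).
Proof. intros [->| ->] [->| ->] [->| ->]; lra. Qed.

Theorem lemma2 (Rmin : R) (Xi Xf : config) (xm : pt)
    (L : R) (x y a : R -> R) (t1 t2 t3 t4 : R) :
  0 < Rmin ->
  4 * Rmin <= pdist (fst Xi) xm ->
  4 * Rmin <= pdist xm (fst Xf) ->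
  4 * Rmin <= pdist (fst Xi) (fst Xf) ->
  optimal_three_point_path Rmin Xi xm Xf L x y a ->
  CSCSC_type Rmin xm L x y a t1 t2 t3 t4 ->
  exists (c2 c4 : pt) (rho : R),
    is_circle_off xm
      (inverse_set xm Rmin (line_through (x t1, y t1) (x t2, y t2))) c2 rho /\
    is_circle_off xm
      (inverse_set xm Rmin (line_through (x t3, y t3) (x t4, y t4))) c4 rho.
Proof.
  intros HR _ _ _ [Hfeas Hopt] Hcs.
  destruct Hcs as [H01 [H23 [H34 [H4L [Arc1 [St2 [Arc3 [St4 [Arc5 [tm [Htm Hxm]]]]]]]]]]].
  destruct Arc1 as [k1 [Hk1 Ha1]]. destruct Arc3 as [k3 [Hk3 Ha3]]. destruct Arc5 as [k5 [Hk5 Ha5]].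
  destruct (kform Rmin k1 HR Hk1) as [s1 [Hs1 ->]].
  destruct (kform Rmin k3 HR Hk3) as [s3 [Hs3 ->]].
  destruct (kform Rmin k5 HR Hk5) as [s5 [Hs5 ->]].
  destruct Hfeas as [Hdub [Hstart [Hhead0 [Hend [HheadL _]]]]].
  assert (HL : 0 <= L) by (destruct Hdub; lra).
  assert (Ea1 : a t1 = a 0 + s1 / Rmin * t1) by (rewrite (Ha1 t1) by lra; f_equal; f_equal; ring).
  assert (Ea2 : a t2 = a t1) by (apply St2; lra).
  assert (Eam : a tm = a t2 + s3 / Rmin * (tm - t2)) by (apply Ha3; lra).
  assert (Ea3 : a t3 = a t2 + s3 / Rmin * (t3 - t2)) by (apply Ha3; lra).
  assert (Ea4 : a t4 = a t3) by (apply St4; lra).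
  assert (EaL : a L = a t4 + s5 / Rmin * (L - t4)) by (apply Ha5; lra).
  destruct (arc_pos Rmin L s1 0 t1 x y a HR Hs1 Hdub ltac:(lra) ltac:(lra)) as [X1 Y1].
  { intros t Ht. rewrite (Ha1 t Ht). f_equal. }
  destruct (line_pos Rmin L t1 t2 x y a Hdub ltac:(lra) ltac:(lra)) as [X2 Y2].
  { intros t Ht. apply St2; lra. }
  destruct (arc_pos Rmin L s3 t2 tm x y a HR Hs3 Hdub ltac:(lra) ltac:(lra)) as [Xm Ym].
  { intros t Ht. apply Ha3; lra. }
  destruct (arc_pos Rmin L s3 t2 t3 x y a HR Hs3 Hdub ltac:(lra) ltac:(lra)) as [X3 Y3].
  { intros t Ht. apply Ha3; lra. }
  destruct (line_pos Rmin L t3 t4 x y a Hdub ltac:(lra) ltac:(lra)) as [X4 Y4].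
  { intros t Ht. apply St4; lra. }
  destruct (arc_pos Rmin L s5 t4 L x y a HR Hs5 Hdub ltac:(lra) ltac:(lra)) as [XL YL].
  { intros t Ht. apply Ha5; lra. }
  assert (HPI := PI_RGT_0).
  destruct (core Rmin s1 s3 s5 (a t1) (a tm) (a t3) ((tm - t2) / Rmin) ((t3 - tm) / Rmin)
              (t2 - t1) (t4 - t3) ((s3 - s1) * Rmin) ((s5 - s3) * Rmin) t1 (L - t4))
    as [Hcos Hcos1]; auto; try lra.
  { apply Rmult_le_pos; [lra|left; apply Rinv_0_lt_compat; lra]. }
  { apply Rmult_le_pos; [lra|left; apply Rinv_0_lt_compat; lra]. }
  { replace ((tm - t2) / Rmin + (t3 - tm) / Rmin) with ((t3 - t2) / Rmin) by (field; lra).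
    apply Rdiv_lt_0_compat; lra. }
  { intros d D2 D4 m2 m4 j1 j2 Hj1 Hj2 Hm2 Hm4 C1 C2 C3 C4 EQ1 EQ2 EQ3 EQ4.
    destruct (per (a tm + d) (s3 * j1) (sj_cases s3 j1 Hs3 Hj1)) as [Ps1 Pc1].
    destruct (per (a t3 + D4) (s3 * (j1 + j2)) (sJ_cases s3 j1 j2 Hs3 Hj1 Hj2)) as [Ps2 Pc2].
    destruct (per (a L) (s3 * (j1 + j2)) (sJ_cases s3 j1 j2 Hs3 Hj1 Hj2)) as [Ps3 Pc3].
    destruct (six_piece Rmin s1 s3 s5 (x 0) (y 0) (a 0) (t1 + s1 * Rmin * D2) m2
      (Rmin * ((tm - t2) / Rmin) + s3 * Rmin * (d - D2) - 2 * PI * Rmin * j1)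
      (Rmin * ((t3 - tm) / Rmin) + s3 * Rmin * (D4 - d) - 2 * PI * Rmin * j2)
      m4 (L - t4 - s5 * Rmin * D4)
      (a t1 + D2) (a tm + d - 2 * PI * (s3 * j1)) (a t3 + D4 - 2 * PI * (s3 * (j1 + j2)))
      (a L - 2 * PI * (s3 * (j1 + j2)))
      (x 0 - s1 * Rmin * sin (a 0)) (y 0 + s1 * Rmin * cos (a 0))
      (x tm - s3 * Rmin * sin (a tm + d)) (y tm + s3 * Rmin * cos (a tm + d))
      (x t4 - s5 * Rmin * sin (a t3)) (y t4 + s5 * Rmin * cos (a t3))
      (x tm) (y tm) (x L) (y L)) as [x' [y' [a' [G P]]]]; auto; try lra.
    - rewrite Ea1. destruct Hs1 as [-> | ->]; field; lra.
    - rewrite <- EQ1. rewrite Xm, X2, X1, Ea2. ring.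
    - rewrite <- EQ2. rewrite Ym, Y2, Y1, Ea2. ring.
    - rewrite Eam, Ea2. destruct Hs3 as [-> | ->]; field; lra.
    - rewrite Ps1. ring.
    - rewrite Pc1. ring.
    - rewrite Ea3, Eam. destruct Hs3 as [-> | ->]; field; lra.
    - rewrite Ps2, Pc2, <- EQ3. rewrite X4, X3, Xm, Ea2. ring.
    - rewrite Ps2, Pc2, <- EQ4. rewrite Y4, Y3, Ym, Ea2. ring.
    - rewrite EaL, Ea4. destruct Hs5 as [-> | ->]; field; lra.
    - rewrite Ps3, XL, Ea4. ring.
    - rewrite Pc3, YL, Ea4. ring.
    - assert (Htp : three_point_path Rmin Xi xm Xf
        (t1 + s1 * Rmin * D2 + (m2 + (Rmin * ((tm - t2) / Rmin) + s3 * Rmin * (d - D2) - 2 * PI * Rmin * j1 +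
          (Rmin * ((t3 - tm) / Rmin) + s3 * Rmin * (D4 - d) - 2 * PI * Rmin * j2 + (m4 + (L - t4 - s5 * Rmin * D4))))))
        x' y' a').
      { destruct G as [Gd [Gs [Ga0 [Ge GaL]]]].
        split; [auto|split; [|split; [|split; [|split]]]].
        - rewrite Gs. auto.
        - rewrite Ga0. auto.
        - rewrite Ge. auto.
        - rewrite GaL. destruct HheadL as [HL1 HL2]. split; [rewrite Pc3|rewrite Ps3]; auto.
        - destruct P as [tt [Htt Hq]]. exists tt. split; auto. rewrite Hq. auto. }
      specialize (Hopt _ _ _ _ Htp).
      replace (Rmin * ((tm - t2) / Rmin)) with (tm - t2) in Hopt by (field; lra).
      replace (Rmin * ((t3 - tm) / Rmin)) with (t3 - tm) in Hopt by (field; lra).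
      lra. }
  set (u := (tm - t2) / Rmin) in *. set (w := (t3 - tm) / Rmin) in *.
  assert (Hthu : a tm - a t1 = s3 * u) by (rewrite Eam, Ea2; unfold u, Rdiv; ring).
  assert (Hthw : a tm - a t3 = - (s3 * w)) by (rewrite Ea3, Eam; unfold w, Rdiv; ring).
  set (hh := s3 * Rmin * (1 - cos u)).
  assert (Hs3a := abs_s s3 Hs3).
  assert (Hhh : hh <> 0).
  { unfold hh. intro Z. apply Rmult_integral in Z. destruct Z as [Z|Z].
    - apply Rmult_integral in Z. destruct Z; [destruct Hs3; lra|lra].
    - apply Hcos1; lra. }
  destruct xm as [xmx xmy]. injection Hxm as Hxmx Hxmy.
  assert (H2e : - sin (a t1) * (xmx - x t1) + cos (a t1) * (xmy - y t1) = hh).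
  { rewrite <- Hxmx, <- Hxmy, Xm, Ym, X2, Y2, Ea2. unfold hh.
    rewrite <- (cos_pm s3 u Hs3), <- Hthu, cos_minus. pose proof (sc1 (a t1)).
    transitivity (s3 * Rmin * ((sin (a t1) ^ 2 + cos (a t1) ^ 2) - (cos (a tm) * cos (a t1) + sin (a tm) * sin (a t1)))); [ring|].
    rewrite H. ring. }
  assert (H4e : - sin (a t3) * (xmx - x t3) + cos (a t3) * (xmy - y t3) = hh).
  { rewrite <- Hxmx, <- Hxmy, Xm, Ym, X3, Y3. unfold hh. rewrite Hcos.
    rewrite <- (cos_pm s3 w Hs3), <- (cos_neg (s3 * w)), <- Hthw, cos_minus. pose proof (sc1 (a t3)).
    transitivity (s3 * Rmin * ((sin (a t3) ^ 2 + cos (a t3) ^ 2) - (cos (a tm) * cos (a t3) + sin (a tm) * sin (a t3)))); [ring|].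
    rewrite H. ring. }
  rewrite X2, Y2, X4, Y4.
  pose proof (inv_circle xmx xmy (x t1) (y t1) (a t1) (t2 - t1) Rmin ltac:(lra) HR ltac:(rewrite H2e; exact Hhh)) as CI2.
  pose proof (inv_circle xmx xmy (x t3) (y t3) (a t3) (t4 - t3) Rmin ltac:(lra) HR ltac:(rewrite H4e; exact Hhh)) as CI4.
  rewrite H2e in CI2. rewrite H4e in CI4.
  eexists; eexists; eexists. split; [exact CI2|exact CI4].
Qed.
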